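(* Let $A,B\in\mathrm{SL}_2\mathbb{Z}_{\ge0}$ be noncommuting, well oriented, with $\mathrm{tr}(A)<\mathrm{tr}(B)$ and $\mathrm{tr}(AB)=\mathrm{tr}(B^2)$. Let $w$ be a word that is empty or ends with $b$, and let $k,h\ge0$. Then $[ab^2wab(ab^2)^kab(ab^2)^hab]<[ab^2w(ab^2)^{k+h+2}]$.
   Context: Words are finite strings over $\{a,b\}$; $\phi$ is the monoid homomorphism with $\phi(a)=A,\phi(b)=B$, and $[w]=\mathrm{tr}(\phi(w))$. Fixed points are for the Möbius action on $\partial\mathcal{H}=\mathbb{P}^1\mathbb{R}$; $\alpha^\pm$ ($\beta^\pm$) are the attracting/repelling fixed points of $A$ ($B$), both equal to the unique fixed point if parabolic. With $\partial\mathcal{H}$ cyclically ordered and $[\alpha,\beta]$ the closed counterclockwise interval from $\alpha$ to $\beta$, let $I^+=\{\alpha^+\}$ if $\alpha^+=\beta^+$, and otherwise the one of $[\alpha^+,\beta^+],[\beta^+,\alpha^+]$ mapped into itself by both $A$ and $B$ (if it exists); define $I^-$ likewise with $A^{-1},B^{-1},\alpha^-,\beta^-$. The pair is coherently oriented if both exist, and well oriented if $A,B$ is coherently oriented but $A,B^{-1}$ is not. *)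

(* Defs.v *)
From HB Require Import structures.
From mathcomp Require Import all_boot all_order all_algebra.
From mathcomp Require Import Rstruct.
From Stdlib Require Rdefinitions.
Set Implicit Arguments. Unset Strict Implicit. Unset Printing Implicit Defensive.
Import Order.TTheory GRing.Theory Num.Theory.
Local Open Scope ring_scope.

Inductive letter := La | Lb.
Definition word := seq letter.

Definition letter_mx (A B : 'M[int]_2) (l : letter) : 'M[int]_2 :=
  match l with La => A | Lb => B end.

Definition phi (A B : 'M[int]_2) (w : word) : 'M[int]_2 :=
  foldr (fun l M => letter_mx A B l *m M) 1%:M w.

Definition wtr (A B : 'M[int]_2) (w : word) : int := \tr (phi A B w).

Definition wpow (u : word) (n : nat) : word := flatten (nseq n u).

Definition ends_with_b (w : word) : Prop := exists w', w = rcons w' Lb.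

Definition SL2Znn (A : 'M[int]_2) : Prop :=
  \det A = 1 /\ forall i j, 0 <= A i j.

(* None stands for the point oo. *)
Definition P1 := option Rdefinitions.R.

Definition mxR (M : 'M[int]_2) (i j : 'I_2) : Rdefinitions.R := (M i j)%:~R.

Definition mob (M : 'M[int]_2) (p : P1) : P1 :=
  let a := mxR M 0 0 in let b := mxR M 0 1 in
  let c := mxR M 1 0 in let d := mxR M 1 1 in
  match p with
  | Some x => if c * x + d == 0 then None else Some ((a * x + b) / (c * x + d))
  | None => if c == 0 then None else Some (a / c)
  end.

Definition fixedpt (M : 'M[int]_2) (p : P1) : Prop := mob M p = p.

(* |(Moebius map)'(p)|^{-1/2}: for a fixed point p = [x:1] this is |cx+d|,
   for p = oo (then c = 0) it is |a|. *)
Definition inv_sqrt_mult (M : 'M[int]_2) (p : P1) : Rdefinitions.R :=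
  match p with
  | Some x => `|mxR M 1 0 * x + mxR M 1 1|
  | None => `|mxR M 0 0|
  end.

(* attracting fixed point: derivative of modulus <= 1 (strictly < 1 in the
   hyperbolic case; in the parabolic case the unique fixed point is both
   attracting and repelling, as in the paper's convention). *)
Definition attracting (M : 'M[int]_2) (p : P1) : Prop :=
  fixedpt M p /\ 1 <= inv_sqrt_mult M p.
Definition repelling (M : 'M[int]_2) (p : P1) : Prop :=
  fixedpt M p /\ inv_sqrt_mult M p <= 1.

(* membership of x in the closed counterclockwise interval [al, be] of
   dR H = R u {oo}, oriented as the boundary of the upper half plane
   (i.e. increasingly along R, then through oo). *)
Definition in_ccw (al be x : P1) : Prop :=
  match al, be with
  | Some a, Some b =>
      if a <= b then (exists y, x = Some y /\ a <= y <= b)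
      else (x = None \/ exists y, x = Some y /\ (a <= y \/ y <= b))
  | None, Some b => x = None \/ exists y, x = Some y /\ y <= b
  | Some a, None => x = None \/ exists y, x = Some y /\ a <= y
  | None, None => x = None
  end.

Definition invariant_ccw (M : 'M[int]_2) (al be : P1) : Prop :=
  forall x, in_ccw al be x -> in_ccw al be (mob M x).

Definition I_exists (M N : 'M[int]_2) (p q : P1) : Prop :=
  p = q \/
  (invariant_ccw M p q /\ invariant_ccw N p q) \/
  (invariant_ccw M q p /\ invariant_ccw N q p).

Definition coherently_oriented (A B : 'M[int]_2) : Prop :=
  exists alp alm bep bem : P1,
    [/\ attracting A alp, repelling A alm, attracting B bep, repelling B bem
        & I_exists A B alp bep /\ I_exists (invmx A) (invmx B) alm bem].

Definition well_oriented (A B : 'M[int]_2) : Prop :=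
  coherently_oriented A B /\ ~ coherently_oriented A (invmx B).

(* Main.v *)
Require Import Defs.
From mathcomp Require Import all_boot all_order all_algebra.
From mathcomp Require Import ring lra zify.
Import Order.TTheory GRing.Theory Num.Theory.
Local Open Scope ring_scope.

Definition mk (a b c d : int) : 'M[int]_2 :=
  \matrix_(i < 2, j < 2) if (i : nat) == 0%N then (if (j : nat) == 0%N then a else b)
                         else (if (j : nat) == 0%N then c else d).

Lemma mkE (M : 'M[int]_2) : M = mk (M 0 0) (M 0 1) (M 1 0) (M 1 1).
Proof.
apply/matrixP => i j; rewrite !mxE.
case: i => [[|[|i]] Hi] //; case: j => [[|[|j]] Hj] //=;
by congr (M _ _); apply: val_inj.
Qed.

Lemma mk_mul a b c d a' b' c' d' :
  mk a b c d *m mk a' b' c' d' = mk (a*a'+b*c') (a*b'+b*d') (c*a'+d*c') (c*b'+d*d').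
Proof.
apply/matrixP => i j; rewrite !mxE !big_ord_recr big_ord0 /= !mxE /=.
by case: i => [[|[|i]] Hi] //; case: j => [[|[|j]] Hj] //=; rewrite add0r.
Qed.

Lemma mk_det a b c d : \det (mk a b c d) = a * d - b * c.
Proof.
rewrite (expand_det_row _ 0) !big_ord_recr big_ord0 /= /cofactor !mxE /=.
rewrite !det_mx11 ?mxE /=; ring.
Qed.

Lemma mk_tr a b c d : \tr (mk a b c d) = a + d.
Proof. by rewrite /mxtrace !big_ord_recr big_ord0 /= !mxE /= add0r. Qed.

Lemma mk_add a b c d a' b' c' d' :
  mk a b c d + mk a' b' c' d' = mk (a+a') (b+b') (c+c') (d+d').
Proof.
apply/matrixP => i j; rewrite !mxE.
by case: i => [[|[|i]] Hi] //; case: j => [[|[|j]] Hj] //=.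
Qed.

Lemma mk_opp a b c d : - mk a b c d = mk (-a) (-b) (-c) (-d).
Proof.
apply/matrixP => i j; rewrite !mxE.
by case: i => [[|[|i]] Hi] //; case: j => [[|[|j]] Hj] //=.
Qed.

Lemma mk_scale k a b c d : k *: mk a b c d = mk (k*a) (k*b) (k*c) (k*d).
Proof.
apply/matrixP => i j; rewrite !mxE.
by case: i => [[|[|i]] Hi] //; case: j => [[|[|j]] Hj] //=.
Qed.

Lemma mk_scalar k : k%:M = mk k 0 0 k :> 'M[int]_2.
Proof.
apply/matrixP => i j; rewrite !mxE.
by case: i => [[|[|i]] Hi] //; case: j => [[|[|j]] Hj] //=.
Qed.

Definition lin (A B : 'M[int]_2) (c0 c1 c2 c3 : int) : 'M[int]_2 :=
  c0%:M + c1 *: A + c2 *: B + c3 *: (A *m B).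

Lemma lin_mul_gen (A B : 'M[int]_2) u0 u1 u2 u3 v0 v1 v2 v3 :
  let x := \tr A in let y := \tr B in let dA := \det A in let dB := \det B in
  let z := \tr (A *m B) in
  lin A B u0 u1 u2 u3 *m lin A B v0 v1 v2 v3 =
  lin A B
   (u0*v0 - u1*v1*dA + u2*v1*(z - x*y) - u2*v2*dB - u2*v3*x*dB - u3*v1*y*dA - u3*v3*dA*dB)
   (u0*v1 + u1*v0 + u1*v1*x + u2*v1*y + u2*v3*dB + u3*v1*z - u3*v2*dB)
   (u0*v2 + u2*v0 - u1*v3*dA + u2*v1*x + u2*v2*y + u2*v3*z + u3*v1*dA)
   (u0*v3 + u3*v0 + u1*v2 + u1*v3*x - u2*v1 + u3*v2*y + u3*v3*z).
Proof.
rewrite /= (mkE A) (mkE B).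
move: (A 0 0) (A 0 1) (A 1 0) (A 1 1) (B 0 0) (B 0 1) (B 1 0) (B 1 1) =>
  a b c d p q r s.
rewrite !mk_tr !mk_det mk_mul mk_tr.
rewrite /lin !mk_mul !mk_scale !mk_scalar !mk_add !mk_mul.
congr mk; ring.
Qed.

Definition Hyp (A B : 'M[int]_2) (x y : int) :=
  [/\ \tr A = x, \tr B = y, \det A = 1, \det B = 1 & \tr (A *m B) = y ^+ 2 - 2].

Lemma lin_mul (A B : 'M[int]_2) (x y : int) (H : Hyp A B x y) u0 u1 u2 u3 v0 v1 v2 v3 :
  lin A B u0 u1 u2 u3 *m lin A B v0 v1 v2 v3 =
  lin A B
   (u0*v0 - u1*v1 + u2*v1*(y^+2 - 2 - x*y) - u2*v2 - u2*v3*x - u3*v1*y - u3*v3)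
   (u0*v1 + u1*v0 + u1*v1*x + u2*v1*y + u2*v3 + u3*v1*(y^+2-2) - u3*v2)
   (u0*v2 + u2*v0 - u1*v3 + u2*v1*x + u2*v2*y + u2*v3*(y^+2-2) + u3*v1)
   (u0*v3 + u3*v0 + u1*v2 + u1*v3*x - u2*v1 + u3*v2*y + u3*v3*(y^+2-2)).
Proof.
case: H => hx hy hA hB hz.
rewrite lin_mul_gen /= hx hy hA hB hz; congr lin; ring.
Qed.

Lemma lin_sub (A B : 'M[int]_2) u0 u1 u2 u3 v0 v1 v2 v3 :
  lin A B u0 u1 u2 u3 - lin A B v0 v1 v2 v3 = lin A B (u0-v0) (u1-v1) (u2-v2) (u3-v3).
Proof.
rewrite (mkE A) (mkE B).
move: (A 0 0) (A 0 1) (A 1 0) (A 1 1) (B 0 0) (B 0 1) (B 1 0) (B 1 1) =>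
  a b c d p q r s.
rewrite /lin !mk_mul !mk_scale !mk_scalar !mk_add !mk_opp !mk_add.
congr mk; ring.
Qed.

Definition Zf (Q C X Y : 'M[int]_2) : 'M[int]_2 :=
  Q *m X *m Q *m Y *m Q - C *m X *m C *m Y *m C *m Q.

Ltac pos := match goal with
 | |- is_true (0 <= _ + _) => apply: addr_ge0; pos
 | |- is_true (0 <= _ * _) => apply: mulr_ge0; pos
 | |- is_true (0 <= _ ^+ _) => apply: exprn_ge0; pos
 | |- is_true (0 <= _%:R) => exact: ler0n
 | _ => assumption
 | _ => by []
 end.

Lemma ZII_lin (A B : 'M[int]_2) (x y : int) : Hyp A B x y ->
  Zf (lin A B 0 (0 - 1) 0 (y)) (lin A B 0 0 0 (1)) (lin A B (1) 0 0 0) (lin A B (1) 0 0 0) =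
  lin A B (2 * y - y ^+ 3 + x) (0 - 3 + 6 * y ^+ 2 - 2 * y ^+ 4 - 4 * x * y + 2 * x * y ^+ 3 - x ^+ 2) (3 - 4 * y ^+ 2 + y ^+ 4) (3 * y - 6 * y ^+ 3 + 2 * y ^+ 5 + 4 * x * y ^+ 2 - 2 * x * y ^+ 4 + x ^+ 2 * y).
Proof.
move=> H; rewrite /Zf.
have -> : lin A B 0 (0 - 1) 0 (y) *m lin A B (1) 0 0 0 = lin A B 0 (0 - 1) 0 (y).
  by rewrite (@lin_mul A B x y H); congr lin; ring.
have -> : lin A B 0 (0 - 1) 0 (y) *m lin A B 0 (0 - 1) 0 (y) = lin A B (0 - 1) (2 * y - y ^+ 3 + x) 0 (0 - 2 * y ^+ 2 + y ^+ 4 - x * y).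
  by rewrite (@lin_mul A B x y H); congr lin; ring.
have -> : lin A B (0 - 1) (2 * y - y ^+ 3 + x) 0 (0 - 2 * y ^+ 2 + y ^+ 4 - x * y) *m lin A B (1) 0 0 0 = lin A B (0 - 1) (2 * y - y ^+ 3 + x) 0 (0 - 2 * y ^+ 2 + y ^+ 4 - x * y).
  by rewrite (@lin_mul A B x y H); congr lin; ring.
have -> : lin A B (0 - 1) (2 * y - y ^+ 3 + x) 0 (0 - 2 * y ^+ 2 + y ^+ 4 - x * y) *m lin A B 0 (0 - 1) 0 (y) = lin A B (2 * y - y ^+ 3 + x) (1 - 4 * y ^+ 2 + 4 * y ^+ 4 - y ^+ 6 - 4 * x * y + 2 * x * y ^+ 3 - x ^+ 2) 0 (0 - y + 4 * y ^+ 3 - 4 * y ^+ 5 + y ^+ 7 + 4 * x * y ^+ 2 - 2 * x * y ^+ 4 + x ^+ 2 * y).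
  by rewrite (@lin_mul A B x y H); congr lin; ring.
have -> : lin A B 0 0 0 (1) *m lin A B (1) 0 0 0 = lin A B 0 0 0 (1).
  by rewrite (@lin_mul A B x y H); congr lin; ring.
have -> : lin A B 0 0 0 (1) *m lin A B 0 0 0 (1) = lin A B (0 - 1) 0 0 (0 - 2 + y ^+ 2).
  by rewrite (@lin_mul A B x y H); congr lin; ring.
have -> : lin A B (0 - 1) 0 0 (0 - 2 + y ^+ 2) *m lin A B (1) 0 0 0 = lin A B (0 - 1) 0 0 (0 - 2 + y ^+ 2).
  by rewrite (@lin_mul A B x y H); congr lin; ring.
have -> : lin A B (0 - 1) 0 0 (0 - 2 + y ^+ 2) *m lin A B 0 0 0 (1) = lin A B (2 - y ^+ 2) 0 0 (3 - 4 * y ^+ 2 + y ^+ 4).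
  by rewrite (@lin_mul A B x y H); congr lin; ring.
have -> : lin A B (2 - y ^+ 2) 0 0 (3 - 4 * y ^+ 2 + y ^+ 4) *m lin A B 0 (0 - 1) 0 (y) = lin A B 0 (4 - 10 * y ^+ 2 + 6 * y ^+ 4 - y ^+ 6) (0 - 3 + 4 * y ^+ 2 - y ^+ 4) (0 - 4 * y + 10 * y ^+ 3 - 6 * y ^+ 5 + y ^+ 7).
  by rewrite (@lin_mul A B x y H); congr lin; ring.
by rewrite lin_sub; congr lin; ring.
Qed.

Lemma ZII_sign (x y : int) : 2 <= x -> x < y ->
  [/\ 0 <= - (0 - 3 + 6 * y ^+ 2 - 2 * y ^+ 4 - 4 * x * y + 2 * x * y ^+ 3 - x ^+ 2), 0 <= (3 - 4 * y ^+ 2 + y ^+ 4), 0 <= (3 * y - 6 * y ^+ 3 + 2 * y ^+ 5 + 4 * x * y ^+ 2 - 2 * x * y ^+ 4 + x ^+ 2 * y) + (0 - 3 + 6 * y ^+ 2 - 2 * y ^+ 4 - 4 * x * y + 2 * x * y ^+ 3 - x ^+ 2) & 1 <= (2 * y - y ^+ 3 + x) + (0 - 3 + 6 * y ^+ 2 - 2 * y ^+ 4 - 4 * x * y + 2 * x * y ^+ 3 - x ^+ 2) + (3 - 4 * y ^+ 2 + y ^+ 4) + (3 * y - 6 * y ^+ 3 + 2 * y ^+ 5 + 4 * x * y ^+ 2 - 2 * x * y ^+ 4 + x ^+ 2 * y)].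
Proof.
move=> hx hxy.
have [u hu ex] : exists2 u, 0 <= u & x = u + 2 by exists (x - 2); [lia | ring].
have [e he ey] : exists2 e, 0 <= e & y = u + e + 3 by exists (y - u - 3); [lia | ring].
rewrite ey ex; split.
- have -> : - (0 - 3 + 6 * (u + e + 3) ^+ 2 - 2 * (u + e + 3) ^+ 4 - 4 * (u + 2) * (u + e + 3) + 2 * (u + 2) * (u + e + 3) ^+ 3 - (u + 2) ^+ 2) = (31 + 80 * e + 66 * e ^+ 2 + 20 * e ^+ 3 + 2 * e ^+ 4 + 42 * u + 82 * u * e + 42 * u * e ^+ 2 + 6 * u * e ^+ 3 + 17 * u ^+ 2 + 24 * u ^+ 2 * e + 6 * u ^+ 2 * e ^+ 2 + 2 * u ^+ 3 + 2 * u ^+ 3 * e) by ring.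
  by pos.
- have -> : (3 - 4 * (u + e + 3) ^+ 2 + (u + e + 3) ^+ 4) = (48 + 84 * e + 50 * e ^+ 2 + 12 * e ^+ 3 + e ^+ 4 + 84 * u + (10 * 10 + 0) * u * e + 36 * u * e ^+ 2 + 4 * u * e ^+ 3 + 50 * u ^+ 2 + 36 * u ^+ 2 * e + 6 * u ^+ 2 * e ^+ 2 + 12 * u ^+ 3 + 4 * u ^+ 3 * e + u ^+ 4) by ring.
  by pos.
- have -> : (3 * (u + e + 3) - 6 * (u + e + 3) ^+ 3 + 2 * (u + e + 3) ^+ 5 + 4 * (u + 2) * (u + e + 3) ^+ 2 - 2 * (u + 2) * (u + e + 3) ^+ 4 + (u + 2) ^+ 2 * (u + e + 3)) + (0 - 3 + 6 * (u + e + 3) ^+ 2 - 2 * (u + e + 3) ^+ 4 - 4 * (u + 2) * (u + e + 3) + 2 * (u + 2) * (u + e + 3) ^+ 3 - (u + 2) ^+ 2) = (62 + (19 * 10 + 1) * e + (21 * 10 + 2) * e ^+ 2 + (10 * 10 + 6) * e ^+ 3 + 24 * e ^+ 4 + 2 * e ^+ 5 + (11 * 10 + 5) * u + (28 * 10 + 6) * u * e + (23 * 10 + 2) * u * e ^+ 2 + 74 * u * e ^+ 3 + 8 * u * e ^+ 4 + 76 * u ^+ 2 + (14 * 10 + 7) * u ^+ 2 * e + 78 * u ^+ 2 * e ^+ 2 + 12 * u ^+ 2 * e ^+ 3 + 21 * u ^+ 3 + 30 * u ^+ 3 * e + 8 * u ^+ 3 * e ^+ 2 + 2 * u ^+ 4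 + 2 * u ^+ 4 * e) by ring.
  by pos.
- rewrite -subr_ge0.
  have -> : (2 * (u + e + 3) - (u + e + 3) ^+ 3 + (u + 2)) + (0 - 3 + 6 * (u + e + 3) ^+ 2 - 2 * (u + e + 3) ^+ 4 - 4 * (u + 2) * (u + e + 3) + 2 * (u + 2) * (u + e + 3) ^+ 3 - (u + 2) ^+ 2) + (3 - 4 * (u + e + 3) ^+ 2 + (u + e + 3) ^+ 4) + (3 * (u + e + 3) - 6 * (u + e + 3) ^+ 3 + 2 * (u + e + 3) ^+ 5 + 4 * (u + 2) * (u + e + 3) ^+ 2 - 2 * (u + 2) * (u + e + 3) ^+ 4 + (u + 2) ^+ 2 * (u + e + 3)) - 1 = (90 + (25 * 10 + 0) * e + (25 * 10 + 3) * e ^+ 2 + (11 * 10 + 7) * e ^+ 3 + 25 * e ^+ 4 + 2 * e ^+ 5 + (17 * 10 + 5) * u + (36 * 10 + 8) * u * e + (26 * 10 + 5) * u * e ^+ 2 + 78 * u * e ^+ 3 + 8 * u * e ^+ 4 + (11 * 10 + 7) * u ^+ 2 + (18 * 10 + 0) * u ^+ 2 * e + 84 * u ^+ 2 * e ^+ 2 + 12 * u ^+ 2 * e ^+ 3 + 32 * u ^+ 3 + 34 * u ^+ 3 * e + 8 * u ^+ 3 * e ^+ 2 + 3 * u ^+ 4 + 2 * u ^+ 4 * e) by ring.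
  by pos.
Qed.

Lemma ZIG_lin (A B : 'M[int]_2) (x y : int) : Hyp A B x y ->
  Zf (lin A B 0 (0 - 1) 0 (y)) (lin A B 0 0 0 (1)) (lin A B (1) 0 0 0) (lin A B (0 - 1) (0 - 1) 0 (y)) =
  lin A B (1 - 2 * y - 4 * y ^+ 2 + y ^+ 3 + 4 * y ^+ 4 - y ^+ 6 - x - 4 * x * y + 2 * x * y ^+ 3 - x ^+ 2) (3 + 5 * y - 6 * y ^+ 2 - 14 * y ^+ 3 + 2 * y ^+ 4 + 10 * y ^+ 5 - 2 * y ^+ 7 + 4 * x + 4 * x * y + x * y ^+ 2 - 2 * x * y ^+ 3 - 6 * x * y ^+ 4 + 2 * x * y ^+ 6 + x ^+ 2 + 6 * x ^+ 2 * y - 3 * x ^+ 2 * y ^+ 3 + x ^+ 3) (0 - 3 - 6 * y + 4 * y ^+ 2 + 11 * y ^+ 3 - y ^+ 4 - 6 * y ^+ 5 + y ^+ 7 - 4 * x + 4 * x * y ^+ 2 - x * y ^+ 4) (1 - 3 * y - 5 * y ^+ 2 + 6 * y ^+ 3 + 14 * y ^+ 4 - 2 * y ^+ 5 - 10 * y ^+ 6 + 2 * y ^+ 8 - 4 * x * y - 4 * x * y ^+ 2 - x * y ^+ 3 + 2 * x * y ^+ 4 + 6 * x * y ^+ 5 - 2 * x * y ^+ 7 - x ^+ 2 * y - 6 * x ^+ 2 * y ^+ 2 + 3 * x ^+ 2 * y ^+ 4 - x ^+ 3 * y).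
Proof.
move=> H; rewrite /Zf.
have -> : lin A B 0 (0 - 1) 0 (y) *m lin A B (1) 0 0 0 = lin A B 0 (0 - 1) 0 (y).
  by rewrite (@lin_mul A B x y H); congr lin; ring.
have -> : lin A B 0 (0 - 1) 0 (y) *m lin A B 0 (0 - 1) 0 (y) = lin A B (0 - 1) (2 * y - y ^+ 3 + x) 0 (0 - 2 * y ^+ 2 + y ^+ 4 - x * y).
  by rewrite (@lin_mul A B x y H); congr lin; ring.
have -> : lin A B (0 - 1) (2 * y - y ^+ 3 + x) 0 (0 - 2 * y ^+ 2 + y ^+ 4 - x * y) *m lin A B (0 - 1) (0 - 1) 0 (y) = lin A B (1 + 2 * y - y ^+ 3 + x) (1 - 2 * y - 4 * y ^+ 2 + y ^+ 3 + 4 * y ^+ 4 - y ^+ 6 - x - 4 * x * y + 2 * x * y ^+ 3 - x ^+ 2) 0 (0 - y + 2 * y ^+ 2 + 4 * y ^+ 3 - y ^+ 4 - 4 * y ^+ 5 + y ^+ 7 + x * y + 4 * x * y ^+ 2 - 2 * x * y ^+ 4 + x ^+ 2 * y).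
  by rewrite (@lin_mul A B x y H); congr lin; ring.
have -> : lin A B (1 + 2 * y - y ^+ 3 + x) (1 - 2 * y - 4 * y ^+ 2 + y ^+ 3 + 4 * y ^+ 4 - y ^+ 6 - x - 4 * x * y + 2 * x * y ^+ 3 - x ^+ 2) 0 (0 - y + 2 * y ^+ 2 + 4 * y ^+ 3 - y ^+ 4 - 4 * y ^+ 5 + y ^+ 7 + x * y + 4 * x * y ^+ 2 - 2 * x * y ^+ 4 + x ^+ 2 * y) *m lin A B 0 (0 - 1) 0 (y) = lin A B (1 - 2 * y - 4 * y ^+ 2 + y ^+ 3 + 4 * y ^+ 4 - y ^+ 6 - x - 4 * x * y + 2 * x * y ^+ 3 - x ^+ 2) (0 - 1 - 4 * y + 4 * y ^+ 2 + 10 * y ^+ 3 - 4 * y ^+ 4 - 12 * y ^+ 5 + y ^+ 6 + 6 * y ^+ 7 - y ^+ 9 - 2 * x + 4 * x * y + 12 * x * y ^+ 2 - 2 * x * y ^+ 3 - 12 * x * y ^+ 4 + 3 * x * y ^+ 6 + x ^+ 2 + 6 * x ^+ 2 * y - 3 * x ^+ 2 * y ^+ 3 + x ^+ 3) 0 (y + 4 * y ^+ 2 - 4 * y ^+ 3 - 10 * y ^+ 4 + 4 * y ^+ 5 + 12 * y ^+ 6 - y ^+ 7 - 6 * y ^+ 8 + y ^+ 10 + 2 * x * y - 4 * x * y ^+ 2 - 12 * x * y ^+ 3 + 2 * x * y ^+ 4 + 12 * x * y ^+ 5 - 3 * x * y ^+ 7 - x ^+ 2 * y - 6 * x ^+ 2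 * y ^+ 2 + 3 * x ^+ 2 * y ^+ 4 - x ^+ 3 * y).
  by rewrite (@lin_mul A B x y H); congr lin; ring.
have -> : lin A B 0 0 0 (1) *m lin A B (1) 0 0 0 = lin A B 0 0 0 (1).
  by rewrite (@lin_mul A B x y H); congr lin; ring.
have -> : lin A B 0 0 0 (1) *m lin A B 0 0 0 (1) = lin A B (0 - 1) 0 0 (0 - 2 + y ^+ 2).
  by rewrite (@lin_mul A B x y H); congr lin; ring.
have -> : lin A B (0 - 1) 0 0 (0 - 2 + y ^+ 2) *m lin A B (0 - 1) (0 - 1) 0 (y) = lin A B (1) (0 - 3 + 4 * y ^+ 2 - y ^+ 4) (2 - y ^+ 2) (2 + 3 * y - y ^+ 2 - 4 * y ^+ 3 + y ^+ 5).
  by rewrite (@lin_mul A B x y H); congr lin; ring.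
have -> : lin A B (1) (0 - 3 + 4 * y ^+ 2 - y ^+ 4) (2 - y ^+ 2) (2 + 3 * y - y ^+ 2 - 4 * y ^+ 3 + y ^+ 5) *m lin A B 0 0 0 (1) = lin A B (0 - 2 - 3 * y + y ^+ 2 + 4 * y ^+ 3 - y ^+ 5 - 2 * x + x * y ^+ 2) (2 - y ^+ 2) (0 - 1) (0 - 3 - 6 * y + 4 * y ^+ 2 + 11 * y ^+ 3 - y ^+ 4 - 6 * y ^+ 5 + y ^+ 7 - 3 * x + 4 * x * y ^+ 2 - x * y ^+ 4).
  by rewrite (@lin_mul A B x y H); congr lin; ring.
have -> : lin A B (0 - 2 - 3 * y + y ^+ 2 + 4 * y ^+ 3 - y ^+ 5 - 2 * x + x * y ^+ 2) (2 - y ^+ 2) (0 - 1) (0 - 3 - 6 * y + 4 * y ^+ 2 + 11 * y ^+ 3 - y ^+ 4 - 6 * y ^+ 5 + y ^+ 7 - 3 * x + 4 * x * y ^+ 2 - x * y ^+ 4) *m lin A B 0 (0 - 1) 0 (y) = lin A B 0 (0 - 4 - 9 * y + 10 * y ^+ 2 + 24 * y ^+ 3 - 6 * y ^+ 4 - 22 * y ^+ 5 + y ^+ 6 + 8 * y ^+ 7 - y ^+ 9 - 6 * x + 11 * x * y ^+ 2 - 6 * x * y ^+ 4 + x * y ^+ 6) (3 + 6 * y - 4 * y ^+ 2 - 11 * y ^+ 3 + y ^+ 4 + 6 * y ^+ 5 - y ^+ 7 + 4 * x - 4 * x * y ^+ 2 + x * y ^+ 4) (0 - 1 + 4 * y +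 9 * y ^+ 2 - 10 * y ^+ 3 - 24 * y ^+ 4 + 6 * y ^+ 5 + 22 * y ^+ 6 - y ^+ 7 - 8 * y ^+ 8 + y ^+ 10 + 6 * x * y - 11 * x * y ^+ 3 + 6 * x * y ^+ 5 - x * y ^+ 7).
  by rewrite (@lin_mul A B x y H); congr lin; ring.
by rewrite lin_sub; congr lin; ring.
Qed.

Lemma ZIG_sign (x y : int) : 2 <= x -> x < y ->
  [/\ 0 <= - (3 + 5 * y - 6 * y ^+ 2 - 14 * y ^+ 3 + 2 * y ^+ 4 + 10 * y ^+ 5 - 2 * y ^+ 7 + 4 * x + 4 * x * y + x * y ^+ 2 - 2 * x * y ^+ 3 - 6 * x * y ^+ 4 + 2 * x * y ^+ 6 + x ^+ 2 + 6 * x ^+ 2 * y - 3 * x ^+ 2 * y ^+ 3 + x ^+ 3), 0 <= (0 - 3 - 6 * y + 4 * y ^+ 2 + 11 * y ^+ 3 - y ^+ 4 - 6 * y ^+ 5 + y ^+ 7 - 4 * x + 4 * x * y ^+ 2 - x * y ^+ 4), 0 <= (1 - 3 * y - 5 * y ^+ 2 + 6 * y ^+ 3 + 14 * y ^+ 4 - 2 * y ^+ 5 - 10 * y ^+ 6 + 2 * y ^+ 8 - 4 * x * y - 4 * x * y ^+ 2 - x * y ^+ 3 + 2 * x * y ^+ 4 + 6 * x * y ^+ 5 - 2 * x * y ^+ 7 - x ^+ 2 * y - 6 * x ^+ 2 * y ^+ 2 + 3 * x ^+ 2 * y ^+ 4 - x ^+ 3 * y) + (3 + 5 * y - 6 *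 y ^+ 2 - 14 * y ^+ 3 + 2 * y ^+ 4 + 10 * y ^+ 5 - 2 * y ^+ 7 + 4 * x + 4 * x * y + x * y ^+ 2 - 2 * x * y ^+ 3 - 6 * x * y ^+ 4 + 2 * x * y ^+ 6 + x ^+ 2 + 6 * x ^+ 2 * y - 3 * x ^+ 2 * y ^+ 3 + x ^+ 3) & 1 <= (1 - 2 * y - 4 * y ^+ 2 + y ^+ 3 + 4 * y ^+ 4 - y ^+ 6 - x - 4 * x * y + 2 * x * y ^+ 3 - x ^+ 2) + (3 + 5 * y - 6 * y ^+ 2 - 14 * y ^+ 3 + 2 * y ^+ 4 + 10 * y ^+ 5 - 2 * y ^+ 7 + 4 * x + 4 * x * y + x * y ^+ 2 - 2 * x * y ^+ 3 - 6 * x * y ^+ 4 + 2 * x * y ^+ 6 + x ^+ 2 + 6 * x ^+ 2 * y - 3 * x ^+ 2 * y ^+ 3 + x ^+ 3) + (0 - 3 - 6 * y + 4 * y ^+ 2 + 11 * y ^+ 3 - y ^+ 4 - 6 * y ^+ 5 + y ^+ 7 - 4 * x + 4 * x * y ^+ 2 - x * y ^+ 4) + (1 - 3 * y - 5 * y ^+ 2 + 6 * y ^+ 3 + 14 * y ^+ 4 - 2 * y ^+ 5 - 10 * y ^+ 6 + 2 * y ^+ 8 - 4 * x * y - 4 * x * y ^+ 2 - x * y ^+ 3 + 2 * x * y ^+ 4 + 6 * x * y ^+ 5 - 2 * x * y ^+ 7 - x ^+ 2 * y - 6 * x ^+ 2 * y ^+ 2 + 3 * x ^+ 2 * y ^+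 4 - x ^+ 3 * y)].
Proof.
move=> hx hxy.
have [u hu ex] : exists2 u, 0 <= u & x = u + 2 by exists (x - 2); [lia | ring].
have [e he ey] : exists2 e, 0 <= e & y = u + e + 3 by exists (y - u - 3); [lia | ring].
rewrite ey ex; split.
- have -> : - (3 + 5 * (u + e + 3) - 6 * (u + e + 3) ^+ 2 - 14 * (u + e + 3) ^+ 3 + 2 * (u + e + 3) ^+ 4 + 10 * (u + e + 3) ^+ 5 - 2 * (u + e + 3) ^+ 7 + 4 * (u + 2) + 4 * (u + 2) * (u + e + 3) + (u + 2) * (u + e + 3) ^+ 2 - 2 * (u + 2) * (u + e + 3) ^+ 3 - 6 * (u + 2) * (u + e + 3) ^+ 4 + 2 * (u + 2) * (u + e + 3) ^+ 6 + (u + 2) ^+ 2 + 6 * (u + 2) ^+ 2 * (u + e + 3) - 3 * (u + 2) ^+ 2 * (u + e + 3) ^+ 3 + (u + 2) ^+ 3) = ((55 * 10 + 0) + ((22 * 10 + 0) * 10 + 1) * e + ((34 * 10 + 6) * 10 + 0) * e ^+ 2 + ((27 * 10 + 6) * 10 + 0) * e ^+ 3 + ((12 * 10 + 1) * 10 + 0) * e ^+ 4 + (29 * 10 + 6) * e ^+ 5 + 38 * e ^+ 6 + 2 * e ^+ 7 + ((14 * 10 + 9) * 10 + 4) * u + ((49 * 10 + 9) * 10 + 6) * u * e + ((62 * 10 + 9) * 10 + 9) * u * e ^+ 2 + ((38 * 10 + 4) * 10 + 6) * u * e ^+ 3 + ((12 * 10 + 1) * 10 + 6) * u * e ^+ 4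 + (19 * 10 + 2) * u * e ^+ 5 + 12 * u * e ^+ 6 + ((15 * 10 + 9) * 10 + 2) * u ^+ 2 + ((43 * 10 + 9) * 10 + 3) * u ^+ 2 * e + ((43 * 10 + 0) * 10 + 5) * u ^+ 2 * e ^+ 2 + ((19 * 10 + 0) * 10 + 7) * u ^+ 2 * e ^+ 3 + (39 * 10 + 0) * u ^+ 2 * e ^+ 4 + 30 * u ^+ 2 * e ^+ 5 + (85 * 10 + 3) * u ^+ 3 + ((19 * 10 + 1) * 10 + 2) * u ^+ 3 * e + ((13 * 10 + 8) * 10 + 5) * u ^+ 3 * e ^+ 2 + (40 * 10 + 0) * u ^+ 3 * e ^+ 3 + 40 * u ^+ 3 * e ^+ 4 + (24 * 10 + 3) * u ^+ 4 + (43 * 10 + 3) * u ^+ 4 * e + (21 * 10 + 0) * u ^+ 4 * e ^+ 2 + 30 * u ^+ 4 * e ^+ 3 + 35 * u ^+ 5 + 48 * u ^+ 5 * e + 12 * u ^+ 5 * e ^+ 2 + 2 * u ^+ 6 + 2 * u ^+ 6 * e) by ring.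
  by pos.
- have -> : (0 - 3 - 6 * (u + e + 3) + 4 * (u + e + 3) ^+ 2 + 11 * (u + e + 3) ^+ 3 - (u + e + 3) ^+ 4 - 6 * (u + e + 3) ^+ 5 + (u + e + 3) ^+ 7 - 4 * (u + 2) + 4 * (u + 2) * (u + e + 3) ^+ 2 - (u + 2) * (u + e + 3) ^+ 4) = ((86 * 10 + 2) + ((27 * 10 + 1) * 10 + 2) * e + ((34 * 10 + 3) * 10 + 2) * e ^+ 2 + ((22 * 10 + 7) * 10 + 0) * e ^+ 3 + (85 * 10 + 2) * e ^+ 4 + (18 * 10 + 3) * e ^+ 5 + 21 * e ^+ 6 + e ^+ 7 + ((26 * 10 + 6) * 10 + 3) * u + ((67 * 10 + 8) * 10 + 0) * u * e + ((67 * 10 + 6) * 10 + 0) * u * e ^+ 2 + ((33 * 10 + 9) * 10 + 6) * u * e ^+ 3 + (91 * 10 + 4) * u * e ^+ 4 + (12 * 10 + 6) * u * e ^+ 5 + 7 * u * e ^+ 6 + ((33 * 10 + 4) * 10 + 8) * u ^+ 2 + ((67 * 10 + 1) * 10 + 0) * u ^+ 2 * e + ((50 * 10 + 7) * 10 + 6) * u ^+ 2 * e ^+ 2 + ((18 * 10 + 2) * 10 + 6) * u ^+ 2 * e ^+ 3 + (31 * 10 + 5) * u ^+ 2 * e ^+ 4 + 21 * u ^+ 2 * e ^+ 5 + ((22 * 10 + 2) * 10 + 0) * u ^+ 3 + ((33 * 10 + 7) * 10 + 2) * u ^+ 3 * e + ((18 * 10 + 2) * 10 + 4) * u ^+ 3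 * e ^+ 2 + (42 * 10 + 0) * u ^+ 3 * e ^+ 3 + 35 * u ^+ 3 * e ^+ 4 + (84 * 10 + 0) * u ^+ 4 + (91 * 10 + 1) * u ^+ 4 * e + (31 * 10 + 5) * u ^+ 4 * e ^+ 2 + 35 * u ^+ 4 * e ^+ 3 + (18 * 10 + 2) * u ^+ 5 + (12 * 10 + 6) * u ^+ 5 * e + 21 * u ^+ 5 * e ^+ 2 + 21 * u ^+ 6 + 7 * u ^+ 6 * e + u ^+ 7) by ring.
  by pos.
- have -> : (1 - 3 * (u + e + 3) - 5 * (u + e + 3) ^+ 2 + 6 * (u + e + 3) ^+ 3 + 14 * (u + e + 3) ^+ 4 - 2 * (u + e + 3) ^+ 5 - 10 * (u + e + 3) ^+ 6 + 2 * (u + e + 3) ^+ 8 - 4 * (u + 2) * (u + e + 3) - 4 * (u + 2) * (u + e + 3) ^+ 2 - (u + 2) * (u + e + 3) ^+ 3 + 2 * (u + 2) * (u + e + 3) ^+ 4 + 6 * (u + 2) * (u + e + 3) ^+ 5 - 2 * (u + 2) * (u + e + 3) ^+ 7 - (u + 2) ^+ 2 * (u + e + 3) - 6 * (u + 2) ^+ 2 * (u + e + 3) ^+ 2 + 3 * (u + 2) ^+ 2 * (u + e + 3) ^+ 4 - (u + 2) ^+ 3 * (u + e + 3)) + (3 + 5 * (u + e + 3) - 6 * (u + e + 3) ^+ 2 - 14 * (u + e + 3) ^+ 3 + 2 * (u + e + 3) ^+ 4 + 10 * (u + e + 3) ^+ 5 - 2 * (u + e + 3) ^+ 7 + 4 *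 (u + 2) + 4 * (u + 2) * (u + e + 3) + (u + 2) * (u + e + 3) ^+ 2 - 2 * (u + 2) * (u + e + 3) ^+ 3 - 6 * (u + 2) * (u + e + 3) ^+ 4 + 2 * (u + 2) * (u + e + 3) ^+ 6 + (u + 2) ^+ 2 + 6 * (u + 2) ^+ 2 * (u + e + 3) - 3 * (u + 2) ^+ 2 * (u + e + 3) ^+ 3 + (u + 2) ^+ 3) = (((11 * 10 + 0) * 10 + 1) + ((49 * 10 + 5) * 10 + 2) * e + ((91 * 10 + 2) * 10 + 1) * e ^+ 2 + ((89 * 10 + 8) * 10 + 0) * e ^+ 3 + ((51 * 10 + 8) * 10 + 0) * e ^+ 4 + ((18 * 10 + 0) * 10 + 2) * e ^+ 5 + (37 * 10 + 2) * e ^+ 6 + 42 * e ^+ 7 + 2 * e ^+ 8 + ((35 * 10 + 3) * 10 + 8) * u + (((13 * 10 + 6) * 10 + 8) * 10 + 7) * u * e + (((21 * 10 + 0) * 10 + 5) * 10 + 4) * u * e ^+ 2 + (((16 * 10 + 7) * 10 + 5) * 10 + 1) * u * e ^+ 3 + ((74 * 10 + 8) * 10 + 8) * u * e ^+ 4 + ((18 * 10 + 9) * 10 + 6) * u * e ^+ 5 + (25 * 10 + 4) * u * e ^+ 6 + 14 * u * e ^+ 7 + ((46 * 10 + 7) * 10 + 8) * u ^+ 2 + (((15 * 10 + 3) * 10 + 7) * 10 + 4) * u ^+ 2 * e + (((19 * 10 + 3) * 10 + 0) * 10 + 2) * u ^+ 2 * e ^+ 2 + (((11 * 10 + 9) *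 10 + 6) * 10 + 5) * u ^+ 2 * e ^+ 3 + ((39 * 10 + 0) * 10 + 3) * u ^+ 2 * e ^+ 4 + (64 * 10 + 2) * u ^+ 2 * e ^+ 5 + 42 * u ^+ 2 * e ^+ 6 + ((32 * 10 + 9) * 10 + 8) * u ^+ 3 + ((90 * 10 + 7) * 10 + 0) * u ^+ 3 * e + ((89 * 10 + 8) * 10 + 7) * u ^+ 3 * e ^+ 2 + ((40 * 10 + 9) * 10 + 2) * u ^+ 3 * e ^+ 3 + (87 * 10 + 0) * u ^+ 3 * e ^+ 4 + 70 * u ^+ 3 * e ^+ 5 + ((13 * 10 + 3) * 10 + 9) * u ^+ 4 + ((30 * 10 + 2) * 10 + 1) * u ^+ 4 * e + ((22 * 10 + 3) * 10 + 8) * u ^+ 4 * e ^+ 2 + (67 * 10 + 0) * u ^+ 4 * e ^+ 3 + 70 * u ^+ 4 * e ^+ 4 + (31 * 10 + 3) * u ^+ 5 + (56 * 10 + 4) * u ^+ 5 * e + (28 * 10 + 2) * u ^+ 5 * e ^+ 2 + 42 * u ^+ 5 * e ^+ 3 + 39 * u ^+ 6 + 54 * u ^+ 6 * e + 14 * u ^+ 6 * e ^+ 2 + 2 * u ^+ 7 + 2 * u ^+ 7 * e) by ring.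
  by pos.
- rewrite -subr_ge0.
  have -> : (1 - 2 * (u + e + 3) - 4 * (u + e + 3) ^+ 2 + (u + e + 3) ^+ 3 + 4 * (u + e + 3) ^+ 4 - (u + e + 3) ^+ 6 - (u + 2) - 4 * (u + 2) * (u + e + 3) + 2 * (u + 2) * (u + e + 3) ^+ 3 - (u + 2) ^+ 2) + (3 + 5 * (u + e + 3) - 6 * (u + e + 3) ^+ 2 - 14 * (u + e + 3) ^+ 3 + 2 * (u + e + 3) ^+ 4 + 10 * (u + e + 3) ^+ 5 - 2 * (u + e + 3) ^+ 7 + 4 * (u + 2) + 4 * (u + 2) * (u + e + 3) + (u + 2) * (u + e + 3) ^+ 2 - 2 * (u + 2) * (u + e + 3) ^+ 3 - 6 * (u + 2) * (u + e + 3) ^+ 4 + 2 * (u + 2) * (u + e + 3) ^+ 6 + (u + 2) ^+ 2 + 6 * (u + 2) ^+ 2 * (u + e + 3) - 3 * (u + 2) ^+ 2 * (u + e + 3) ^+ 3 + (u + 2) ^+ 3) + (0 - 3 - 6 * (u + e + 3) + 4 * (u + e + 3) ^+ 2 + 11 * (u + e + 3) ^+ 3 - (u + e + 3) ^+ 4 - 6 * (u + e + 3) ^+ 5 + (u + e + 3) ^+ 7 - 4 * (u + 2) + 4 * (u + 2) * (u + e + 3) ^+ 2 - (u + 2) * (u + e + 3) ^+ 4) + (1 - 3 * (u + e + 3) - 5 * (u + e + 3) ^+ 2 + 6 * (u + e + 3) ^+ 3 + 14 * (u + e + 3) ^+ 4 - 2 * (u + e + 3) ^+ 5 - 10 * (u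 + e + 3) ^+ 6 + 2 * (u + e + 3) ^+ 8 - 4 * (u + 2) * (u + e + 3) - 4 * (u + 2) * (u + e + 3) ^+ 2 - (u + 2) * (u + e + 3) ^+ 3 + 2 * (u + 2) * (u + e + 3) ^+ 4 + 6 * (u + 2) * (u + e + 3) ^+ 5 - 2 * (u + 2) * (u + e + 3) ^+ 7 - (u + 2) ^+ 2 * (u + e + 3) - 6 * (u + 2) ^+ 2 * (u + e + 3) ^+ 2 + 3 * (u + 2) ^+ 2 * (u + e + 3) ^+ 4 - (u + 2) ^+ 3 * (u + e + 3)) - 1 = (((16 * 10 + 2) * 10 + 1) + ((67 * 10 + 3) * 10 + 9) * e + (((11 * 10 + 5) * 10 + 9) * 10 + 5) * e ^+ 2 + (((10 * 10 + 7) * 10 + 6) * 10 + 3) * e ^+ 3 + ((59 * 10 + 0) * 10 + 1) * e ^+ 4 + ((19 * 10 + 6) * 10 + 7) * e ^+ 5 + (39 * 10 + 2) * e ^+ 6 + 43 * e ^+ 7 + 2 * e ^+ 8 + ((53 * 10 + 1) * 10 + 3) * u + (((18 * 10 + 6) * 10 + 0) * 10 + 1) * u * e + (((26 * 10 + 3) * 10 + 7) * 10 + 1) * u * e ^+ 2 + (((19 * 10 + 6) * 10 + 2) * 10 + 5) * u * e ^+ 3 + ((83 * 10 + 1) * 10 + 2) * u * e ^+ 4 + ((20 * 10 + 1) * 10 + 6) * u * e ^+ 5 + (26 * 10 + 1) * u * e ^+ 6 + 14 * u * e ^+ 7 + ((71 * 10 + 1) * 10 + 7) * u ^+ 2 +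 (((20 * 10 + 6) * 10 + 5) * 10 + 9) * u ^+ 2 * e + (((23 * 10 + 5) * 10 + 9) * 10 + 8) * u ^+ 2 * e ^+ 2 + (((13 * 10 + 6) * 10 + 1) * 10 + 1) * u ^+ 2 * e ^+ 3 + ((42 * 10 + 0) * 10 + 3) * u ^+ 2 * e ^+ 4 + (66 * 10 + 3) * u ^+ 2 * e ^+ 5 + 42 * u ^+ 2 * e ^+ 6 + ((50 * 10 + 4) * 10 + 9) * u ^+ 3 + (((11 * 10 + 9) * 10 + 2) * 10 + 4) * u ^+ 3 * e + (((10 * 10 + 6) * 10 + 3) * 10 + 1) * u ^+ 3 * e ^+ 2 + ((44 * 10 + 9) * 10 + 2) * u ^+ 3 * e ^+ 3 + (90 * 10 + 5) * u ^+ 3 * e ^+ 4 + 70 * u ^+ 3 * e ^+ 5 + ((20 * 10 + 5) * 10 + 0) * u ^+ 4 + ((38 * 10 + 4) * 10 + 2) * u ^+ 4 * e + ((25 * 10 + 3) * 10 + 8) * u ^+ 4 * e ^+ 2 + (70 * 10 + 5) * u ^+ 4 * e ^+ 3 + 70 * u ^+ 4 * e ^+ 4 + (47 * 10 + 7) * u ^+ 5 + (68 * 10 + 4) * u ^+ 5 * e + (30 * 10 + 3) * u ^+ 5 * e ^+ 2 + 42 * u ^+ 5 * e ^+ 3 + 59 * u ^+ 6 + 61 * u ^+ 6 * e + 14 * u ^+ 6 * e ^+ 2 + 3 * u ^+ 7 + 2 * u ^+ 7 * e) by ring.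
  by pos.
Qed.

Lemma ZGI_lin (A B : 'M[int]_2) (x y : int) : Hyp A B x y ->
  Zf (lin A B 0 (0 - 1) 0 (y)) (lin A B 0 0 0 (1)) (lin A B (0 - 1) (0 - 1) 0 (y)) (lin A B (1) 0 0 0) =
  lin A B (0 - 1 - 2 * y - 3 * y ^+ 2 + y ^+ 3 + 4 * y ^+ 4 - y ^+ 6 - x - 4 * x * y + 2 * x * y ^+ 3 - x ^+ 2) (3 + 4 * y - 6 * y ^+ 2 - 14 * y ^+ 3 + 2 * y ^+ 4 + 10 * y ^+ 5 - 2 * y ^+ 7 + 4 * x + 4 * x * y + x * y ^+ 2 - 2 * x * y ^+ 3 - 6 * x * y ^+ 4 + 2 * x * y ^+ 6 + x ^+ 2 + 6 * x ^+ 2 * y - 3 * x ^+ 2 * y ^+ 3 + x ^+ 3) (0 - 3 - 4 * y + 4 * y ^+ 2 + 10 * y ^+ 3 - y ^+ 4 - 6 * y ^+ 5 + y ^+ 7 - 3 * x + 4 * x * y ^+ 2 - x * y ^+ 4) (0 - 1 - 3 * y - 4 * y ^+ 2 + 6 * y ^+ 3 + 14 * y ^+ 4 - 2 * y ^+ 5 - 10 * y ^+ 6 + 2 * y ^+ 8 - 4 * x * y - 4 * x * y ^+ 2 - x * y ^+ 3 + 2 * x * y ^+ 4 + 6 * x * y ^+ 5 - 2 * x * y ^+ 7 - x ^+ 2 * y - 6 * x ^+ 2 * y ^+ 2 + 3 * x ^+ 2 * y ^+ 4 - x ^+ 3 * y).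
Proof.
move=> H; rewrite /Zf.
have -> : lin A B 0 (0 - 1) 0 (y) *m lin A B (0 - 1) (0 - 1) 0 (y) = lin A B (0 - 1) (1 + 2 * y - y ^+ 3 + x) 0 (0 - y - 2 * y ^+ 2 + y ^+ 4 - x * y).
  by rewrite (@lin_mul A B x y H); congr lin; ring.
have -> : lin A B (0 - 1) (1 + 2 * y - y ^+ 3 + x) 0 (0 - y - 2 * y ^+ 2 + y ^+ 4 - x * y) *m lin A B 0 (0 - 1) 0 (y) = lin A B (1 + 2 * y - y ^+ 3 + x) (1 - 2 * y - 4 * y ^+ 2 + y ^+ 3 + 4 * y ^+ 4 - y ^+ 6 - x - 4 * x * y + 2 * x * y ^+ 3 - x ^+ 2) 0 (0 - y + 2 * y ^+ 2 + 4 * y ^+ 3 - y ^+ 4 - 4 * y ^+ 5 + y ^+ 7 + x * y + 4 * x * y ^+ 2 - 2 * x * y ^+ 4 + x ^+ 2 * y).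
  by rewrite (@lin_mul A B x y H); congr lin; ring.
have -> : lin A B (1 + 2 * y - y ^+ 3 + x) (1 - 2 * y - 4 * y ^+ 2 + y ^+ 3 + 4 * y ^+ 4 - y ^+ 6 - x - 4 * x * y + 2 * x * y ^+ 3 - x ^+ 2) 0 (0 - y + 2 * y ^+ 2 + 4 * y ^+ 3 - y ^+ 4 - 4 * y ^+ 5 + y ^+ 7 + x * y + 4 * x * y ^+ 2 - 2 * x * y ^+ 4 + x ^+ 2 * y) *m lin A B (1) 0 0 0 = lin A B (1 + 2 * y - y ^+ 3 + x) (1 - 2 * y - 4 * y ^+ 2 + y ^+ 3 + 4 * y ^+ 4 - y ^+ 6 - x - 4 * x * y + 2 * x * y ^+ 3 - x ^+ 2) 0 (0 - y + 2 * y ^+ 2 + 4 * y ^+ 3 - y ^+ 4 - 4 * y ^+ 5 + y ^+ 7 + x * y + 4 * x * y ^+ 2 - 2 * x * y ^+ 4 + x ^+ 2 * y).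
  by rewrite (@lin_mul A B x y H); congr lin; ring.
have -> : lin A B (1 + 2 * y - y ^+ 3 + x) (1 - 2 * y - 4 * y ^+ 2 + y ^+ 3 + 4 * y ^+ 4 - y ^+ 6 - x - 4 * x * y + 2 * x * y ^+ 3 - x ^+ 2) 0 (0 - y + 2 * y ^+ 2 + 4 * y ^+ 3 - y ^+ 4 - 4 * y ^+ 5 + y ^+ 7 + x * y + 4 * x * y ^+ 2 - 2 * x * y ^+ 4 + x ^+ 2 * y) *m lin A B 0 (0 - 1) 0 (y) = lin A B (1 - 2 * y - 4 * y ^+ 2 + y ^+ 3 + 4 * y ^+ 4 - y ^+ 6 - x - 4 * x * y + 2 * x * y ^+ 3 - x ^+ 2) (0 - 1 - 4 * y + 4 * y ^+ 2 + 10 * y ^+ 3 - 4 * y ^+ 4 - 12 * y ^+ 5 + y ^+ 6 + 6 * y ^+ 7 - y ^+ 9 - 2 * x + 4 * x * y + 12 * x * y ^+ 2 - 2 * x * y ^+ 3 - 12 * x * y ^+ 4 + 3 * x * y ^+ 6 + x ^+ 2 + 6 * x ^+ 2 * y - 3 * x ^+ 2 * y ^+ 3 + x ^+ 3) 0 (y + 4 * y ^+ 2 - 4 * y ^+ 3 - 10 * y ^+ 4 + 4 * y ^+ 5 + 12 * y ^+ 6 - y ^+ 7 - 6 * y ^+ 8 + y ^+ 10 + 2 * x * y - 4 * x * y ^+ 2 - 12 * x * y ^+ 3 + 2 * x * y ^+ 4 + 12 * x * y ^+ 5 - 3 * x * y ^+ 7 - x ^+ 2 * y - 6 * x ^+ 2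 * y ^+ 2 + 3 * x ^+ 2 * y ^+ 4 - x ^+ 3 * y).
  by rewrite (@lin_mul A B x y H); congr lin; ring.
have -> : lin A B 0 0 0 (1) *m lin A B (0 - 1) (0 - 1) 0 (y) = lin A B 0 (2 - y ^+ 2) (0 - 1) (0 - 1 - 2 * y + y ^+ 3).
  by rewrite (@lin_mul A B x y H); congr lin; ring.
have -> : lin A B 0 (2 - y ^+ 2) (0 - 1) (0 - 1 - 2 * y + y ^+ 3) *m lin A B 0 0 0 (1) = lin A B (1 + 2 * y - y ^+ 3 + x) (0 - 1) 0 (2 + 4 * y - y ^+ 2 - 4 * y ^+ 3 + y ^+ 5 + 2 * x - x * y ^+ 2).
  by rewrite (@lin_mul A B x y H); congr lin; ring.
have -> : lin A B (1 + 2 * y - y ^+ 3 + x) (0 - 1) 0 (2 + 4 * y - y ^+ 2 - 4 * y ^+ 3 + y ^+ 5 + 2 * x - x * y ^+ 2) *m lin A B (1) 0 0 0 = lin A B (1 + 2 * y - y ^+ 3 + x) (0 - 1) 0 (2 + 4 * y - y ^+ 2 - 4 * y ^+ 3 + y ^+ 5 + 2 * x - x * y ^+ 2).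
  by rewrite (@lin_mul A B x y H); congr lin; ring.
have -> : lin A B (1 + 2 * y - y ^+ 3 + x) (0 - 1) 0 (2 + 4 * y - y ^+ 2 - 4 * y ^+ 3 + y ^+ 5 + 2 * x - x * y ^+ 2) *m lin A B 0 0 0 (1) = lin A B (0 - 2 - 4 * y + y ^+ 2 + 4 * y ^+ 3 - y ^+ 5 - 2 * x + x * y ^+ 2) 0 (1) (0 - 3 - 6 * y + 4 * y ^+ 2 + 11 * y ^+ 3 - y ^+ 4 - 6 * y ^+ 5 + y ^+ 7 - 4 * x + 4 * x * y ^+ 2 - x * y ^+ 4).
  by rewrite (@lin_mul A B x y H); congr lin; ring.
have -> : lin A B (0 - 2 - 4 * y + y ^+ 2 + 4 * y ^+ 3 - y ^+ 5 - 2 * x + x * y ^+ 2) 0 (1) (0 - 3 - 6 * y + 4 * y ^+ 2 + 11 * y ^+ 3 - y ^+ 4 - 6 * y ^+ 5 + y ^+ 7 - 4 * x + 4 * x * y ^+ 2 - x * y ^+ 4) *m lin A B 0 (0 - 1) 0 (y) = lin A B (2 - y ^+ 2) (0 - 4 - 8 * y + 10 * y ^+ 2 + 24 * y ^+ 3 - 6 * y ^+ 4 - 22 * y ^+ 5 + y ^+ 6 + 8 * y ^+ 7 - y ^+ 9 - 6 * x + 11 * x * y ^+ 2 - 6 * x * y ^+ 4 + x * y ^+ 6) (3 + 4 * y - 4 * y ^+ 2 - 10 * y ^+ 3 + y ^+ 4 + 6 * y ^+ 5 - y ^+ 7 + 3 * x - 4 * x * y ^+ 2 + x * y ^+ 4)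 (1 + 4 * y + 8 * y ^+ 2 - 10 * y ^+ 3 - 24 * y ^+ 4 + 6 * y ^+ 5 + 22 * y ^+ 6 - y ^+ 7 - 8 * y ^+ 8 + y ^+ 10 + 6 * x * y - 11 * x * y ^+ 3 + 6 * x * y ^+ 5 - x * y ^+ 7).
  by rewrite (@lin_mul A B x y H); congr lin; ring.
by rewrite lin_sub; congr lin; ring.
Qed.

Lemma ZGI_sign (x y : int) : 2 <= x -> x < y ->
  [/\ 0 <= - (3 + 4 * y - 6 * y ^+ 2 - 14 * y ^+ 3 + 2 * y ^+ 4 + 10 * y ^+ 5 - 2 * y ^+ 7 + 4 * x + 4 * x * y + x * y ^+ 2 - 2 * x * y ^+ 3 - 6 * x * y ^+ 4 + 2 * x * y ^+ 6 + x ^+ 2 + 6 * x ^+ 2 * y - 3 * x ^+ 2 * y ^+ 3 + x ^+ 3), 0 <= (0 - 3 - 4 * y + 4 * y ^+ 2 + 10 * y ^+ 3 - y ^+ 4 - 6 * y ^+ 5 + y ^+ 7 - 3 * x + 4 * x * y ^+ 2 - x * y ^+ 4), 0 <= (0 - 1 - 3 * y - 4 * y ^+ 2 + 6 * y ^+ 3 + 14 * y ^+ 4 - 2 * y ^+ 5 - 10 * y ^+ 6 + 2 * y ^+ 8 - 4 * x * y - 4 * x * y ^+ 2 - x * y ^+ 3 + 2 * x * y ^+ 4 + 6 * x * y ^+ 5 - 2 * x * y ^+ 7 - x ^+ 2 * y - 6 * x ^+ 2 * y ^+ 2 + 3 * x ^+ 2 * y ^+ 4 - x ^+ 3 * y)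 + (3 + 4 * y - 6 * y ^+ 2 - 14 * y ^+ 3 + 2 * y ^+ 4 + 10 * y ^+ 5 - 2 * y ^+ 7 + 4 * x + 4 * x * y + x * y ^+ 2 - 2 * x * y ^+ 3 - 6 * x * y ^+ 4 + 2 * x * y ^+ 6 + x ^+ 2 + 6 * x ^+ 2 * y - 3 * x ^+ 2 * y ^+ 3 + x ^+ 3) & 1 <= (0 - 1 - 2 * y - 3 * y ^+ 2 + y ^+ 3 + 4 * y ^+ 4 - y ^+ 6 - x - 4 * x * y + 2 * x * y ^+ 3 - x ^+ 2) + (3 + 4 * y - 6 * y ^+ 2 - 14 * y ^+ 3 + 2 * y ^+ 4 + 10 * y ^+ 5 - 2 * y ^+ 7 + 4 * x + 4 * x * y + x * y ^+ 2 - 2 * x * y ^+ 3 - 6 * x * y ^+ 4 + 2 * x * y ^+ 6 + x ^+ 2 + 6 * x ^+ 2 * y - 3 * x ^+ 2 * y ^+ 3 + x ^+ 3) + (0 - 3 - 4 * y + 4 * y ^+ 2 + 10 * y ^+ 3 - y ^+ 4 - 6 * y ^+ 5 + y ^+ 7 - 3 * x + 4 * x * y ^+ 2 - x * y ^+ 4) + (0 - 1 - 3 * y - 4 * y ^+ 2 + 6 * y ^+ 3 + 14 * y ^+ 4 - 2 * y ^+ 5 - 10 * y ^+ 6 + 2 * y ^+ 8 - 4 * x * y - 4 * x * y ^+ 2 - x * y ^+ 3 + 2 * x * y ^+ 4 + 6 * x * y ^+ 5 - 2 * x * y ^+ 7 - x ^+ 2 * y - 6 * x ^+ 2 * y ^+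 2 + 3 * x ^+ 2 * y ^+ 4 - x ^+ 3 * y)].
Proof.
move=> hx hxy.
have [u hu ex] : exists2 u, 0 <= u & x = u + 2 by exists (x - 2); [lia | ring].
have [e he ey] : exists2 e, 0 <= e & y = u + e + 3 by exists (y - u - 3); [lia | ring].
rewrite ey ex; split.
- have -> : - (3 + 4 * (u + e + 3) - 6 * (u + e + 3) ^+ 2 - 14 * (u + e + 3) ^+ 3 + 2 * (u + e + 3) ^+ 4 + 10 * (u + e + 3) ^+ 5 - 2 * (u + e + 3) ^+ 7 + 4 * (u + 2) + 4 * (u + 2) * (u + e + 3) + (u + 2) * (u + e + 3) ^+ 2 - 2 * (u + 2) * (u + e + 3) ^+ 3 - 6 * (u + 2) * (u + e + 3) ^+ 4 + 2 * (u + 2) * (u + e + 3) ^+ 6 + (u + 2) ^+ 2 + 6 * (u + 2) ^+ 2 * (u + e + 3) - 3 * (u + 2) ^+ 2 * (u + e + 3) ^+ 3 + (u + 2) ^+ 3) = ((55 * 10 + 3) + ((22 * 10 + 0) * 10 + 2) * e + ((34 * 10 + 6) * 10 + 0) * e ^+ 2 + ((27 * 10 + 6) * 10 + 0) * e ^+ 3 + ((12 * 10 + 1) * 10 + 0) * e ^+ 4 + (29 * 10 + 6) * e ^+ 5 + 38 * e ^+ 6 + 2 * e ^+ 7 + ((14 * 10 + 9) * 10 + 5) * u + ((49 * 10 + 9) * 10 + 6) * u * e + ((62 * 10 + 9) * 10 + 9) * u * e ^+ 2 + ((38 * 10 + 4) * 10 + 6) * u * e ^+ 3 + ((12 * 10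 + 1) * 10 + 6) * u * e ^+ 4 + (19 * 10 + 2) * u * e ^+ 5 + 12 * u * e ^+ 6 + ((15 * 10 + 9) * 10 + 2) * u ^+ 2 + ((43 * 10 + 9) * 10 + 3) * u ^+ 2 * e + ((43 * 10 + 0) * 10 + 5) * u ^+ 2 * e ^+ 2 + ((19 * 10 + 0) * 10 + 7) * u ^+ 2 * e ^+ 3 + (39 * 10 + 0) * u ^+ 2 * e ^+ 4 + 30 * u ^+ 2 * e ^+ 5 + (85 * 10 + 3) * u ^+ 3 + ((19 * 10 + 1) * 10 + 2) * u ^+ 3 * e + ((13 * 10 + 8) * 10 + 5) * u ^+ 3 * e ^+ 2 + (40 * 10 + 0) * u ^+ 3 * e ^+ 3 + 40 * u ^+ 3 * e ^+ 4 + (24 * 10 + 3) * u ^+ 4 + (43 * 10 + 3) * u ^+ 4 * e + (21 * 10 + 0) * u ^+ 4 * e ^+ 2 + 30 * u ^+ 4 * e ^+ 3 + 35 * u ^+ 5 + 48 * u ^+ 5 * e + 12 * u ^+ 5 * e ^+ 2 + 2 * u ^+ 6 + 2 * u ^+ 6 * e) by ring.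
  by pos.
- have -> : (0 - 3 - 4 * (u + e + 3) + 4 * (u + e + 3) ^+ 2 + 10 * (u + e + 3) ^+ 3 - (u + e + 3) ^+ 4 - 6 * (u + e + 3) ^+ 5 + (u + e + 3) ^+ 7 - 3 * (u + 2) + 4 * (u + 2) * (u + e + 3) ^+ 2 - (u + 2) * (u + e + 3) ^+ 4) = ((84 * 10 + 3) + ((26 * 10 + 8) * 10 + 7) * e + ((34 * 10 + 2) * 10 + 3) * e ^+ 2 + ((22 * 10 + 6) * 10 + 9) * e ^+ 3 + (85 * 10 + 2) * e ^+ 4 + (18 * 10 + 3) * e ^+ 5 + 21 * e ^+ 6 + e ^+ 7 + ((26 * 10 + 3) * 10 + 9) * u + ((67 * 10 + 6) * 10 + 2) * u * e + ((67 * 10 + 5) * 10 + 7) * u * e ^+ 2 + ((33 * 10 + 9) * 10 + 6) * u * e ^+ 3 + (91 * 10 + 4) * u * e ^+ 4 + (12 * 10 + 6) * u * e ^+ 5 + 7 * u * e ^+ 6 + ((33 * 10 + 3) * 10 + 9) * u ^+ 2 + ((67 * 10 + 0) * 10 + 7) * u ^+ 2 * e + ((50 * 10 + 7) * 10 + 6) * u ^+ 2 * e ^+ 2 + ((18 * 10 + 2) * 10 + 6) * u ^+ 2 * e ^+ 3 + (31 * 10 + 5) * u ^+ 2 * e ^+ 4 + 21 * u ^+ 2 * e ^+ 5 + ((22 * 10 + 1) * 10 + 9) * u ^+ 3 + ((33 * 10 + 7) * 10 + 2) * u ^+ 3 * e + ((18 * 10 + 2) * 10 + 4) * u ^+ 3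 * e ^+ 2 + (42 * 10 + 0) * u ^+ 3 * e ^+ 3 + 35 * u ^+ 3 * e ^+ 4 + (84 * 10 + 0) * u ^+ 4 + (91 * 10 + 1) * u ^+ 4 * e + (31 * 10 + 5) * u ^+ 4 * e ^+ 2 + 35 * u ^+ 4 * e ^+ 3 + (18 * 10 + 2) * u ^+ 5 + (12 * 10 + 6) * u ^+ 5 * e + 21 * u ^+ 5 * e ^+ 2 + 21 * u ^+ 6 + 7 * u ^+ 6 * e + u ^+ 7) by ring.
  by pos.
- have -> : (0 - 1 - 3 * (u + e + 3) - 4 * (u + e + 3) ^+ 2 + 6 * (u + e + 3) ^+ 3 + 14 * (u + e + 3) ^+ 4 - 2 * (u + e + 3) ^+ 5 - 10 * (u + e + 3) ^+ 6 + 2 * (u + e + 3) ^+ 8 - 4 * (u + 2) * (u + e + 3) - 4 * (u + 2) * (u + e + 3) ^+ 2 - (u + 2) * (u + e + 3) ^+ 3 + 2 * (u + 2) * (u + e + 3) ^+ 4 + 6 * (u + 2) * (u + e + 3) ^+ 5 - 2 * (u + 2) * (u + e + 3) ^+ 7 - (u + 2) ^+ 2 * (u + e + 3) - 6 * (u + 2) ^+ 2 * (u + e + 3) ^+ 2 + 3 * (u + 2) ^+ 2 * (u + e + 3) ^+ 4 - (u + 2) ^+ 3 * (u + e + 3)) + (3 + 4 * (u + e + 3) - 6 * (u + e + 3) ^+ 2 - 14 * (u + e + 3) ^+ 3 + 2 * (u + e + 3) ^+ 4 + 10 * (u + e + 3) ^+ 5 - 2 * (u + e + 3) ^+ 7 +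 4 * (u + 2) + 4 * (u + 2) * (u + e + 3) + (u + 2) * (u + e + 3) ^+ 2 - 2 * (u + 2) * (u + e + 3) ^+ 3 - 6 * (u + 2) * (u + e + 3) ^+ 4 + 2 * (u + 2) * (u + e + 3) ^+ 6 + (u + 2) ^+ 2 + 6 * (u + 2) ^+ 2 * (u + e + 3) - 3 * (u + 2) ^+ 2 * (u + e + 3) ^+ 3 + (u + 2) ^+ 3) = (((11 * 10 + 0) * 10 + 5) + ((49 * 10 + 5) * 10 + 7) * e + ((91 * 10 + 2) * 10 + 2) * e ^+ 2 + ((89 * 10 + 8) * 10 + 0) * e ^+ 3 + ((51 * 10 + 8) * 10 + 0) * e ^+ 4 + ((18 * 10 + 0) * 10 + 2) * e ^+ 5 + (37 * 10 + 2) * e ^+ 6 + 42 * e ^+ 7 + 2 * e ^+ 8 + ((35 * 10 + 4) * 10 + 3) * u + (((13 * 10 + 6) * 10 + 8) * 10 + 9) * u * e + (((21 * 10 + 0) * 10 + 5) * 10 + 4) * u * e ^+ 2 + (((16 * 10 + 7) * 10 + 5) * 10 + 1) * u * e ^+ 3 + ((74 * 10 + 8) * 10 + 8) * u * e ^+ 4 + ((18 * 10 + 9) * 10 + 6) * u * e ^+ 5 + (25 * 10 + 4) * u * e ^+ 6 + 14 * u * e ^+ 7 + ((46 * 10 + 7) * 10 + 9) * u ^+ 2 + (((15 * 10 + 3) * 10 + 7) * 10 + 4) * u ^+ 2 * e + (((19 * 10 + 3) * 10 + 0) * 10 + 2) * u ^+ 2 * e ^+ 2 + (((11 * 10 + 9)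 * 10 + 6) * 10 + 5) * u ^+ 2 * e ^+ 3 + ((39 * 10 + 0) * 10 + 3) * u ^+ 2 * e ^+ 4 + (64 * 10 + 2) * u ^+ 2 * e ^+ 5 + 42 * u ^+ 2 * e ^+ 6 + ((32 * 10 + 9) * 10 + 8) * u ^+ 3 + ((90 * 10 + 7) * 10 + 0) * u ^+ 3 * e + ((89 * 10 + 8) * 10 + 7) * u ^+ 3 * e ^+ 2 + ((40 * 10 + 9) * 10 + 2) * u ^+ 3 * e ^+ 3 + (87 * 10 + 0) * u ^+ 3 * e ^+ 4 + 70 * u ^+ 3 * e ^+ 5 + ((13 * 10 + 3) * 10 + 9) * u ^+ 4 + ((30 * 10 + 2) * 10 + 1) * u ^+ 4 * e + ((22 * 10 + 3) * 10 + 8) * u ^+ 4 * e ^+ 2 + (67 * 10 + 0) * u ^+ 4 * e ^+ 3 + 70 * u ^+ 4 * e ^+ 4 + (31 * 10 + 3) * u ^+ 5 + (56 * 10 + 4) * u ^+ 5 * e + (28 * 10 + 2) * u ^+ 5 * e ^+ 2 + 42 * u ^+ 5 * e ^+ 3 + 39 * u ^+ 6 + 54 * u ^+ 6 * e + 14 * u ^+ 6 * e ^+ 2 + 2 * u ^+ 7 + 2 * u ^+ 7 * e) by ring.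
  by pos.
- rewrite -subr_ge0.
  have -> : (0 - 1 - 2 * (u + e + 3) - 3 * (u + e + 3) ^+ 2 + (u + e + 3) ^+ 3 + 4 * (u + e + 3) ^+ 4 - (u + e + 3) ^+ 6 - (u + 2) - 4 * (u + 2) * (u + e + 3) + 2 * (u + 2) * (u + e + 3) ^+ 3 - (u + 2) ^+ 2) + (3 + 4 * (u + e + 3) - 6 * (u + e + 3) ^+ 2 - 14 * (u + e + 3) ^+ 3 + 2 * (u + e + 3) ^+ 4 + 10 * (u + e + 3) ^+ 5 - 2 * (u + e + 3) ^+ 7 + 4 * (u + 2) + 4 * (u + 2) * (u + e + 3) + (u + 2) * (u + e + 3) ^+ 2 - 2 * (u + 2) * (u + e + 3) ^+ 3 - 6 * (u + 2) * (u + e + 3) ^+ 4 + 2 * (u + 2) * (u + e + 3) ^+ 6 + (u + 2) ^+ 2 + 6 * (u + 2) ^+ 2 * (u + e + 3) - 3 * (u + 2) ^+ 2 * (u + e + 3) ^+ 3 + (u + 2) ^+ 3) + (0 - 3 - 4 * (u + e + 3) + 4 * (u + e + 3) ^+ 2 + 10 * (u + e + 3) ^+ 3 - (u + e + 3) ^+ 4 - 6 * (u + e + 3) ^+ 5 + (u + e + 3) ^+ 7 - 3 * (u + 2) + 4 * (u + 2) * (u + e + 3) ^+ 2 - (u + 2) * (u + e + 3) ^+ 4) + (0 - 1 - 3 * (u + e + 3) - 4 * (u + e + 3) ^+ 2 + 6 * (u + e + 3) ^+ 3 + 14 * (u + e + 3) ^+ 4 - 2 * (u + e + 3) ^+ 5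 - 10 * (u + e + 3) ^+ 6 + 2 * (u + e + 3) ^+ 8 - 4 * (u + 2) * (u + e + 3) - 4 * (u + 2) * (u + e + 3) ^+ 2 - (u + 2) * (u + e + 3) ^+ 3 + 2 * (u + 2) * (u + e + 3) ^+ 4 + 6 * (u + 2) * (u + e + 3) ^+ 5 - 2 * (u + 2) * (u + e + 3) ^+ 7 - (u + 2) ^+ 2 * (u + e + 3) - 6 * (u + 2) ^+ 2 * (u + e + 3) ^+ 2 + 3 * (u + 2) ^+ 2 * (u + e + 3) ^+ 4 - (u + 2) ^+ 3 * (u + e + 3)) - 1 = (((16 * 10 + 1) * 10 + 3) + ((67 * 10 + 2) * 10 + 5) * e + (((11 * 10 + 5) * 10 + 8) * 10 + 8) * e ^+ 2 + (((10 * 10 + 7) * 10 + 6) * 10 + 2) * e ^+ 3 + ((59 * 10 + 0) * 10 + 1) * e ^+ 4 + ((19 * 10 + 6) * 10 + 7) * e ^+ 5 + (39 * 10 + 2) * e ^+ 6 + 43 * e ^+ 7 + 2 * e ^+ 8 + ((53 * 10 + 0) * 10 + 0) * u + (((18 * 10 + 5) * 10 + 8) * 10 + 7) * u * e + (((26 * 10 + 3) * 10 + 6) * 10 + 8) * u * e ^+ 2 + (((19 * 10 + 6) * 10 + 2) * 10 + 5) * u * e ^+ 3 + ((83 * 10 + 1) * 10 + 2) * u * e ^+ 4 + ((20 * 10 + 1) * 10 + 6) * u * e ^+ 5 + (26 * 10 + 1) * u * e ^+ 6 + 14 * u * e ^+ 7 + ((71 * 10 + 1) * 10 + 0) * u ^+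 2 + (((20 * 10 + 6) * 10 + 5) * 10 + 6) * u ^+ 2 * e + (((23 * 10 + 5) * 10 + 9) * 10 + 8) * u ^+ 2 * e ^+ 2 + (((13 * 10 + 6) * 10 + 1) * 10 + 1) * u ^+ 2 * e ^+ 3 + ((42 * 10 + 0) * 10 + 3) * u ^+ 2 * e ^+ 4 + (66 * 10 + 3) * u ^+ 2 * e ^+ 5 + 42 * u ^+ 2 * e ^+ 6 + ((50 * 10 + 4) * 10 + 8) * u ^+ 3 + (((11 * 10 + 9) * 10 + 2) * 10 + 4) * u ^+ 3 * e + (((10 * 10 + 6) * 10 + 3) * 10 + 1) * u ^+ 3 * e ^+ 2 + ((44 * 10 + 9) * 10 + 2) * u ^+ 3 * e ^+ 3 + (90 * 10 + 5) * u ^+ 3 * e ^+ 4 + 70 * u ^+ 3 * e ^+ 5 + ((20 * 10 + 5) * 10 + 0) * u ^+ 4 + ((38 * 10 + 4) * 10 + 2) * u ^+ 4 * e + ((25 * 10 + 3) * 10 + 8) * u ^+ 4 * e ^+ 2 + (70 * 10 + 5) * u ^+ 4 * e ^+ 3 + 70 * u ^+ 4 * e ^+ 4 + (47 * 10 + 7) * u ^+ 5 + (68 * 10 + 4) * u ^+ 5 * e + (30 * 10 + 3) * u ^+ 5 * e ^+ 2 + 42 * u ^+ 5 * e ^+ 3 + 59 * u ^+ 6 + 61 * u ^+ 6 * e + 14 * u ^+ 6 * e ^+ 2 + 3 * u ^+ 7 + 2 * u ^+ 7 * e) by ring.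
  by pos.
Qed.

Lemma ZGG_lin (A B : 'M[int]_2) (x y : int) : Hyp A B x y ->
  Zf (lin A B 0 (0 - 1) 0 (y)) (lin A B 0 0 0 (1)) (lin A B (0 - 1) (0 - 1) 0 (y)) (lin A B (0 - 1) (0 - 1) 0 (y)) =
  lin A B (y + 7 * y ^+ 2 + 5 * y ^+ 3 - 8 * y ^+ 4 - 11 * y ^+ 5 + 2 * y ^+ 6 + 6 * y ^+ 7 - y ^+ 9 + x + 8 * x * y + 11 * x * y ^+ 2 - 4 * x * y ^+ 3 - 12 * x * y ^+ 4 + 3 * x * y ^+ 6 + 2 * x ^+ 2 + 6 * x ^+ 2 * y - 3 * x ^+ 2 * y ^+ 3 + x ^+ 3) (0 - 2 - 9 * y - y ^+ 2 + 28 * y ^+ 3 + 27 * y ^+ 4 - 20 * y ^+ 5 - 33 * y ^+ 6 + 4 * y ^+ 7 + 14 * y ^+ 8 - 2 * y ^+ 10 - 8 * x - 16 * x * y - 2 * x * y ^+ 2 + 20 * x * y ^+ 3 + 12 * x * y ^+ 4 + 2 * x * y ^+ 5 - 4 * x * y ^+ 6 - 8 * x * y ^+ 7 + 2 * x * y ^+ 9 - 6 * x ^+ 2 - 12 * x ^+ 2 * y - 12 * x ^+ 2 * y ^+ 2 + 6 * x ^+ 2 * y ^+ 3 + 18 * x ^+ 2 * y ^+ 4 - 5 * x ^+ 2 * y ^+ 6 - 2 * x ^+ 3 - 8 * x ^+ 3 * y + 4 * x ^+ 3 * y ^+ 3 - x ^+ 4) (2 + 10 * y + 5 * y ^+ 2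 - 21 * y ^+ 3 - 23 * y ^+ 4 + 12 * y ^+ 5 + 22 * y ^+ 6 - 2 * y ^+ 7 - 8 * y ^+ 8 + y ^+ 10 + 7 * x + 12 * x * y - 8 * x * y ^+ 2 - 22 * x * y ^+ 3 + 2 * x * y ^+ 4 + 12 * x * y ^+ 5 - 2 * x * y ^+ 7 + 4 * x ^+ 2 - 4 * x ^+ 2 * y ^+ 2 + x ^+ 2 * y ^+ 4) (2 * y + 9 * y ^+ 2 + y ^+ 3 - 28 * y ^+ 4 - 27 * y ^+ 5 + 20 * y ^+ 6 + 33 * y ^+ 7 - 4 * y ^+ 8 - 14 * y ^+ 9 + 2 * y ^+ 11 + 8 * x * y + 16 * x * y ^+ 2 + 2 * x * y ^+ 3 - 20 * x * y ^+ 4 - 12 * x * y ^+ 5 - 2 * x * y ^+ 6 + 4 * x * y ^+ 7 + 8 * x * y ^+ 8 - 2 * x * y ^+ 10 + 6 * x ^+ 2 * y + 12 * x ^+ 2 * y ^+ 2 + 12 * x ^+ 2 * y ^+ 3 - 6 * x ^+ 2 * y ^+ 4 - 18 * x ^+ 2 * y ^+ 5 + 5 * x ^+ 2 * y ^+ 7 + 2 * x ^+ 3 * y + 8 * x ^+ 3 * y ^+ 2 - 4 * x ^+ 3 * y ^+ 4 + x ^+ 4 * y).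
Proof.
move=> H; rewrite /Zf.
have -> : lin A B 0 (0 - 1) 0 (y) *m lin A B (0 - 1) (0 - 1) 0 (y) = lin A B (0 - 1) (1 + 2 * y - y ^+ 3 + x) 0 (0 - y - 2 * y ^+ 2 + y ^+ 4 - x * y).
  by rewrite (@lin_mul A B x y H); congr lin; ring.
have -> : lin A B (0 - 1) (1 + 2 * y - y ^+ 3 + x) 0 (0 - y - 2 * y ^+ 2 + y ^+ 4 - x * y) *m lin A B 0 (0 - 1) 0 (y) = lin A B (1 + 2 * y - y ^+ 3 + x) (1 - 2 * y - 4 * y ^+ 2 + y ^+ 3 + 4 * y ^+ 4 - y ^+ 6 - x - 4 * x * y + 2 * x * y ^+ 3 - x ^+ 2) 0 (0 - y + 2 * y ^+ 2 + 4 * y ^+ 3 - y ^+ 4 - 4 * y ^+ 5 + y ^+ 7 + x * y + 4 * x * y ^+ 2 - 2 * x * y ^+ 4 + x ^+ 2 * y).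
  by rewrite (@lin_mul A B x y H); congr lin; ring.
have -> : lin A B (1 + 2 * y - y ^+ 3 + x) (1 - 2 * y - 4 * y ^+ 2 + y ^+ 3 + 4 * y ^+ 4 - y ^+ 6 - x - 4 * x * y + 2 * x * y ^+ 3 - x ^+ 2) 0 (0 - y + 2 * y ^+ 2 + 4 * y ^+ 3 - y ^+ 4 - 4 * y ^+ 5 + y ^+ 7 + x * y + 4 * x * y ^+ 2 - 2 * x * y ^+ 4 + x ^+ 2 * y) *m lin A B (0 - 1) (0 - 1) 0 (y) = lin A B (0 - 4 * y - 4 * y ^+ 2 + 2 * y ^+ 3 + 4 * y ^+ 4 - y ^+ 6 - 2 * x - 4 * x * y + 2 * x * y ^+ 3 - x ^+ 2) (0 - 2 - 2 * y + 8 * y ^+ 2 + 9 * y ^+ 3 - 8 * y ^+ 4 - 12 * y ^+ 5 + 2 * y ^+ 6 + 6 * y ^+ 7 - y ^+ 9 - x + 8 * x * y + 12 * x * y ^+ 2 - 4 * x * y ^+ 3 - 12 * x * y ^+ 4 + 3 * x * y ^+ 6 + 2 * x ^+ 2 + 6 * x ^+ 2 * y - 3 * x ^+ 2 * y ^+ 3 + x ^+ 3) 0 (2 * y + 2 * y ^+ 2 - 8 * y ^+ 3 - 9 * y ^+ 4 + 8 * y ^+ 5 + 12 * y ^+ 6 - 2 * y ^+ 7 - 6 * y ^+ 8 + y ^+ 10 + x * y - 8 * x * y ^+ 2 - 12 * x * y ^+ 3 + 4 * x * y ^+ 4 + 12 * x * y ^+ 5 - 3 * x * y ^+ 7 - 2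 * x ^+ 2 * y - 6 * x ^+ 2 * y ^+ 2 + 3 * x ^+ 2 * y ^+ 4 - x ^+ 3 * y).
  by rewrite (@lin_mul A B x y H); congr lin; ring.
have -> : lin A B (0 - 4 * y - 4 * y ^+ 2 + 2 * y ^+ 3 + 4 * y ^+ 4 - y ^+ 6 - 2 * x - 4 * x * y + 2 * x * y ^+ 3 - x ^+ 2) (0 - 2 - 2 * y + 8 * y ^+ 2 + 9 * y ^+ 3 - 8 * y ^+ 4 - 12 * y ^+ 5 + 2 * y ^+ 6 + 6 * y ^+ 7 - y ^+ 9 - x + 8 * x * y + 12 * x * y ^+ 2 - 4 * x * y ^+ 3 - 12 * x * y ^+ 4 + 3 * x * y ^+ 6 + 2 * x ^+ 2 + 6 * x ^+ 2 * y - 3 * x ^+ 2 * y ^+ 3 + x ^+ 3) 0 (2 * y + 2 * y ^+ 2 - 8 * y ^+ 3 - 9 * y ^+ 4 + 8 * y ^+ 5 + 12 * y ^+ 6 - 2 * y ^+ 7 - 6 * y ^+ 8 + y ^+ 10 + x * y - 8 * x * y ^+ 2 - 12 * x * y ^+ 3 + 4 * x * y ^+ 4 + 12 * x * y ^+ 5 - 3 * x * y ^+ 7 - 2 * x ^+ 2 * y - 6 * x ^+ 2 * y ^+ 2 + 3 * x ^+ 2 * y ^+ 4 - x ^+ 3 * y) *m lin A B 0 (0 - 1) 0 (y) = lin A B (0 - 2 - 2 * y + 8 * y ^+ 2 + 9 * y ^+ 3 - 8 * y ^+ 4 - 12 * y ^+ 5 + 2 * y ^+ 6 + 6 * y ^+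 7 - y ^+ 9 - x + 8 * x * y + 12 * x * y ^+ 2 - 4 * x * y ^+ 3 - 12 * x * y ^+ 4 + 3 * x * y ^+ 6 + 2 * x ^+ 2 + 6 * x ^+ 2 * y - 3 * x ^+ 2 * y ^+ 3 + x ^+ 3) (8 * y + 8 * y ^+ 2 - 20 * y ^+ 3 - 24 * y ^+ 4 + 24 * y ^+ 5 + 34 * y ^+ 6 - 12 * y ^+ 7 - 24 * y ^+ 8 + 2 * y ^+ 9 + 8 * y ^+ 10 - y ^+ 12 + 4 * x + 8 * x * y - 24 * x * y ^+ 2 - 36 * x * y ^+ 3 + 24 * x * y ^+ 4 + 48 * x * y ^+ 5 - 6 * x * y ^+ 6 - 24 * x * y ^+ 7 + 4 * x * y ^+ 9 + 2 * x ^+ 2 - 12 * x ^+ 2 * y - 24 * x ^+ 2 * y ^+ 2 + 6 * x ^+ 2 * y ^+ 3 + 24 * x ^+ 2 * y ^+ 4 - 6 * x ^+ 2 * y ^+ 6 - 2 * x ^+ 3 - 8 * x ^+ 3 * y + 4 * x ^+ 3 * y ^+ 3 - x ^+ 4) 0 (0 - 8 * y ^+ 2 - 8 * y ^+ 3 + 20 * y ^+ 4 + 24 * y ^+ 5 - 24 * y ^+ 6 - 34 * y ^+ 7 + 12 * y ^+ 8 + 24 * y ^+ 9 - 2 * y ^+ 10 - 8 * y ^+ 11 + y ^+ 13 - 4 * x * y - 8 * x * y ^+ 2 + 24 * x * y ^+ 3 + 36 * x * y ^+ 4 - 24 * x * y ^+ 5 - 48 * x * y ^+ 6 + 6 * x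 * y ^+ 7 + 24 * x * y ^+ 8 - 4 * x * y ^+ 10 - 2 * x ^+ 2 * y + 12 * x ^+ 2 * y ^+ 2 + 24 * x ^+ 2 * y ^+ 3 - 6 * x ^+ 2 * y ^+ 4 - 24 * x ^+ 2 * y ^+ 5 + 6 * x ^+ 2 * y ^+ 7 + 2 * x ^+ 3 * y + 8 * x ^+ 3 * y ^+ 2 - 4 * x ^+ 3 * y ^+ 4 + x ^+ 4 * y).
  by rewrite (@lin_mul A B x y H); congr lin; ring.
have -> : lin A B 0 0 0 (1) *m lin A B (0 - 1) (0 - 1) 0 (y) = lin A B 0 (2 - y ^+ 2) (0 - 1) (0 - 1 - 2 * y + y ^+ 3).
  by rewrite (@lin_mul A B x y H); congr lin; ring.
have -> : lin A B 0 (2 - y ^+ 2) (0 - 1) (0 - 1 - 2 * y + y ^+ 3) *m lin A B 0 0 0 (1) = lin A B (1 + 2 * y - y ^+ 3 + x) (0 - 1) 0 (2 + 4 * y - y ^+ 2 - 4 * y ^+ 3 + y ^+ 5 + 2 * x - x * y ^+ 2).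
  by rewrite (@lin_mul A B x y H); congr lin; ring.
have -> : lin A B (1 + 2 * y - y ^+ 3 + x) (0 - 1) 0 (2 + 4 * y - y ^+ 2 - 4 * y ^+ 3 + y ^+ 5 + 2 * x - x * y ^+ 2) *m lin A B (0 - 1) (0 - 1) 0 (y) = lin A B (0 - 2 - 2 * y + y ^+ 3 - x) (4 + 6 * y - 4 * y ^+ 2 - 11 * y ^+ 3 + y ^+ 4 + 6 * y ^+ 5 - y ^+ 7 + 4 * x - 4 * x * y ^+ 2 + x * y ^+ 4) (0 - 2 - 3 * y + y ^+ 2 + 4 * y ^+ 3 - y ^+ 5 - 2 * x + x * y ^+ 2) (0 - 2 - 7 * y - 5 * y ^+ 2 + 8 * y ^+ 3 + 11 * y ^+ 4 - 2 * y ^+ 5 - 6 * y ^+ 6 + y ^+ 8 - 2 * x - 4 * x * y + x * y ^+ 2 + 4 * x * y ^+ 3 - x * y ^+ 5).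
  by rewrite (@lin_mul A B x y H); congr lin; ring.
have -> : lin A B (0 - 2 - 2 * y + y ^+ 3 - x) (4 + 6 * y - 4 * y ^+ 2 - 11 * y ^+ 3 + y ^+ 4 + 6 * y ^+ 5 - y ^+ 7 + 4 * x - 4 * x * y ^+ 2 + x * y ^+ 4) (0 - 2 - 3 * y + y ^+ 2 + 4 * y ^+ 3 - y ^+ 5 - 2 * x + x * y ^+ 2) (0 - 2 - 7 * y - 5 * y ^+ 2 + 8 * y ^+ 3 + 11 * y ^+ 4 - 2 * y ^+ 5 - 6 * y ^+ 6 + y ^+ 8 - 2 * x - 4 * x * y + x * y ^+ 2 + 4 * x * y ^+ 3 - x * y ^+ 5) *m lin A B 0 0 0 (1) = lin A B (2 + 7 * y + 5 * y ^+ 2 - 8 * y ^+ 3 - 11 * y ^+ 4 + 2 * y ^+ 5 + 6 * y ^+ 6 - y ^+ 8 + 4 * x + 7 * x * y - 2 * x * y ^+ 2 - 8 * x * y ^+ 3 + 2 * x * y ^+ 5 + 2 * x ^+ 2 - x ^+ 2 * y ^+ 2) (0 - 2 - 3 * y + y ^+ 2 + 4 * y ^+ 3 - y ^+ 5 - 2 * x + x * y ^+ 2) 0 (2 + 12 * y + 8 * y ^+ 2 - 22 * y ^+ 3 - 27 * y ^+ 4 + 12 * y ^+ 5 + 23 * y ^+ 6 - 2 * y ^+ 7 - 8 * y ^+ 8 + y ^+ 10 + 7 * x + 14 * x * y - 8 * x * y ^+ 2 - 23 * x * y ^+ 3 + 2 * x * y ^+ 4 + 12 * x * y ^+ 5 -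 2 * x * y ^+ 7 + 4 * x ^+ 2 - 4 * x ^+ 2 * y ^+ 2 + x ^+ 2 * y ^+ 4).
  by rewrite (@lin_mul A B x y H); congr lin; ring.
have -> : lin A B (2 + 7 * y + 5 * y ^+ 2 - 8 * y ^+ 3 - 11 * y ^+ 4 + 2 * y ^+ 5 + 6 * y ^+ 6 - y ^+ 8 + 4 * x + 7 * x * y - 2 * x * y ^+ 2 - 8 * x * y ^+ 3 + 2 * x * y ^+ 5 + 2 * x ^+ 2 - x ^+ 2 * y ^+ 2) (0 - 2 - 3 * y + y ^+ 2 + 4 * y ^+ 3 - y ^+ 5 - 2 * x + x * y ^+ 2) 0 (2 + 12 * y + 8 * y ^+ 2 - 22 * y ^+ 3 - 27 * y ^+ 4 + 12 * y ^+ 5 + 23 * y ^+ 6 - 2 * y ^+ 7 - 8 * y ^+ 8 + y ^+ 10 + 7 * x + 14 * x * y - 8 * x * y ^+ 2 - 23 * x * y ^+ 3 + 2 * x * y ^+ 4 + 12 * x * y ^+ 5 - 2 * x * y ^+ 7 + 4 * x ^+ 2 - 4 * x ^+ 2 * y ^+ 2 + x ^+ 2 * y ^+ 4) *m lin A B 0 (0 - 1) 0 (y) = lin A B (0 - 2 - 3 * y + y ^+ 2 + 4 * y ^+ 3 - y ^+ 5 - 2 * x + x * y ^+ 2) (2 + 17 * y + 9 * y ^+ 2 - 48 * y ^+ 3 - 51 * y ^+ 4 + 44 * y ^+ 5 + 67 * y ^+ 6 - 16 * y ^+ 7 - 38 * y ^+ 8 + 2 * y ^+ 9 + 10 * y ^+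 10 - y ^+ 12 + 12 * x + 24 * x * y - 22 * x * y ^+ 2 - 56 * x * y ^+ 3 + 12 * x * y ^+ 4 + 46 * x * y ^+ 5 - 2 * x * y ^+ 6 - 16 * x * y ^+ 7 + 2 * x * y ^+ 9 + 8 * x ^+ 2 - 12 * x ^+ 2 * y ^+ 2 + 6 * x ^+ 2 * y ^+ 4 - x ^+ 2 * y ^+ 6) (0 - 2 - 10 * y - 5 * y ^+ 2 + 21 * y ^+ 3 + 23 * y ^+ 4 - 12 * y ^+ 5 - 22 * y ^+ 6 + 2 * y ^+ 7 + 8 * y ^+ 8 - y ^+ 10 - 7 * x - 12 * x * y + 8 * x * y ^+ 2 + 22 * x * y ^+ 3 - 2 * x * y ^+ 4 - 12 * x * y ^+ 5 + 2 * x * y ^+ 7 - 4 * x ^+ 2 + 4 * x ^+ 2 * y ^+ 2 - x ^+ 2 * y ^+ 4) (0 - 2 * y - 17 * y ^+ 2 - 9 * y ^+ 3 + 48 * y ^+ 4 + 51 * y ^+ 5 - 44 * y ^+ 6 - 67 * y ^+ 7 + 16 * y ^+ 8 + 38 * y ^+ 9 - 2 * y ^+ 10 - 10 * y ^+ 11 + y ^+ 13 - 12 * x * y - 24 * x * y ^+ 2 + 22 * x * y ^+ 3 + 56 * x * y ^+ 4 - 12 * x * y ^+ 5 - 46 * x * y ^+ 6 + 2 * x * y ^+ 7 + 16 * x * y ^+ 8 - 2 * x * y ^+ 10 - 8 * x ^+ 2 * y + 12 * x ^+ 2 * y ^+ 3 - 6 * x ^+ 2 * y ^+ 5 + x ^+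 2 * y ^+ 7).
  by rewrite (@lin_mul A B x y H); congr lin; ring.
by rewrite lin_sub; congr lin; ring.
Qed.

Lemma ZGG_sign (x y : int) : 2 <= x -> x < y ->
  [/\ 0 <= - (0 - 2 - 9 * y - y ^+ 2 + 28 * y ^+ 3 + 27 * y ^+ 4 - 20 * y ^+ 5 - 33 * y ^+ 6 + 4 * y ^+ 7 + 14 * y ^+ 8 - 2 * y ^+ 10 - 8 * x - 16 * x * y - 2 * x * y ^+ 2 + 20 * x * y ^+ 3 + 12 * x * y ^+ 4 + 2 * x * y ^+ 5 - 4 * x * y ^+ 6 - 8 * x * y ^+ 7 + 2 * x * y ^+ 9 - 6 * x ^+ 2 - 12 * x ^+ 2 * y - 12 * x ^+ 2 * y ^+ 2 + 6 * x ^+ 2 * y ^+ 3 + 18 * x ^+ 2 * y ^+ 4 - 5 * x ^+ 2 * y ^+ 6 - 2 * x ^+ 3 - 8 * x ^+ 3 * y + 4 * x ^+ 3 * y ^+ 3 - x ^+ 4), 0 <= (2 + 10 * y + 5 * y ^+ 2 - 21 * y ^+ 3 - 23 * y ^+ 4 + 12 * y ^+ 5 + 22 * y ^+ 6 - 2 * y ^+ 7 - 8 * y ^+ 8 + y ^+ 10 + 7 * x + 12 * x * y - 8 * x * y ^+ 2 - 22 * x * y ^+ 3 + 2 * x * y ^+ 4 + 12 * x * y ^+ 5 - 2 * x * y ^+ 7 + 4 * x ^+ 2 - 4 * x ^+ 2 * y ^+ 2 + x ^+ 2 * y ^+ 4), 0 <= (2 * y + 9 * y ^+ 2 + y ^+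 3 - 28 * y ^+ 4 - 27 * y ^+ 5 + 20 * y ^+ 6 + 33 * y ^+ 7 - 4 * y ^+ 8 - 14 * y ^+ 9 + 2 * y ^+ 11 + 8 * x * y + 16 * x * y ^+ 2 + 2 * x * y ^+ 3 - 20 * x * y ^+ 4 - 12 * x * y ^+ 5 - 2 * x * y ^+ 6 + 4 * x * y ^+ 7 + 8 * x * y ^+ 8 - 2 * x * y ^+ 10 + 6 * x ^+ 2 * y + 12 * x ^+ 2 * y ^+ 2 + 12 * x ^+ 2 * y ^+ 3 - 6 * x ^+ 2 * y ^+ 4 - 18 * x ^+ 2 * y ^+ 5 + 5 * x ^+ 2 * y ^+ 7 + 2 * x ^+ 3 * y + 8 * x ^+ 3 * y ^+ 2 - 4 * x ^+ 3 * y ^+ 4 + x ^+ 4 * y) + (0 - 2 - 9 * y - y ^+ 2 + 28 * y ^+ 3 + 27 * y ^+ 4 - 20 * y ^+ 5 - 33 * y ^+ 6 + 4 * y ^+ 7 + 14 * y ^+ 8 - 2 * y ^+ 10 - 8 * x - 16 * x * y - 2 * x * y ^+ 2 + 20 * x * y ^+ 3 + 12 * x * y ^+ 4 + 2 * x * y ^+ 5 - 4 * x * y ^+ 6 - 8 * x * y ^+ 7 + 2 * x * y ^+ 9 - 6 * x ^+ 2 - 12 * x ^+ 2 * y - 12 * x ^+ 2 * y ^+ 2 + 6 * x ^+ 2 * y ^+ 3 + 18 * x ^+ 2 * y ^+ 4 - 5 * x ^+ 2 * y ^+ 6 - 2 * x ^+ 3 - 8 * x ^+ 3 * y + 4 *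 x ^+ 3 * y ^+ 3 - x ^+ 4) & 1 <= (y + 7 * y ^+ 2 + 5 * y ^+ 3 - 8 * y ^+ 4 - 11 * y ^+ 5 + 2 * y ^+ 6 + 6 * y ^+ 7 - y ^+ 9 + x + 8 * x * y + 11 * x * y ^+ 2 - 4 * x * y ^+ 3 - 12 * x * y ^+ 4 + 3 * x * y ^+ 6 + 2 * x ^+ 2 + 6 * x ^+ 2 * y - 3 * x ^+ 2 * y ^+ 3 + x ^+ 3) + (0 - 2 - 9 * y - y ^+ 2 + 28 * y ^+ 3 + 27 * y ^+ 4 - 20 * y ^+ 5 - 33 * y ^+ 6 + 4 * y ^+ 7 + 14 * y ^+ 8 - 2 * y ^+ 10 - 8 * x - 16 * x * y - 2 * x * y ^+ 2 + 20 * x * y ^+ 3 + 12 * x * y ^+ 4 + 2 * x * y ^+ 5 - 4 * x * y ^+ 6 - 8 * x * y ^+ 7 + 2 * x * y ^+ 9 - 6 * x ^+ 2 - 12 * x ^+ 2 * y - 12 * x ^+ 2 * y ^+ 2 + 6 * x ^+ 2 * y ^+ 3 + 18 * x ^+ 2 * y ^+ 4 - 5 * x ^+ 2 * y ^+ 6 - 2 * x ^+ 3 - 8 * x ^+ 3 * y + 4 * x ^+ 3 * y ^+ 3 - x ^+ 4) + (2 + 10 * y + 5 * y ^+ 2 - 21 * y ^+ 3 - 23 * y ^+ 4 + 12 * y ^+ 5 + 22 * y ^+ 6 - 2 * y ^+ 7 - 8 * y ^+ 8 + y ^+ 10 + 7 * x + 12 * x * y - 8 * x * y ^+ 2 - 22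 * x * y ^+ 3 + 2 * x * y ^+ 4 + 12 * x * y ^+ 5 - 2 * x * y ^+ 7 + 4 * x ^+ 2 - 4 * x ^+ 2 * y ^+ 2 + x ^+ 2 * y ^+ 4) + (2 * y + 9 * y ^+ 2 + y ^+ 3 - 28 * y ^+ 4 - 27 * y ^+ 5 + 20 * y ^+ 6 + 33 * y ^+ 7 - 4 * y ^+ 8 - 14 * y ^+ 9 + 2 * y ^+ 11 + 8 * x * y + 16 * x * y ^+ 2 + 2 * x * y ^+ 3 - 20 * x * y ^+ 4 - 12 * x * y ^+ 5 - 2 * x * y ^+ 6 + 4 * x * y ^+ 7 + 8 * x * y ^+ 8 - 2 * x * y ^+ 10 + 6 * x ^+ 2 * y + 12 * x ^+ 2 * y ^+ 2 + 12 * x ^+ 2 * y ^+ 3 - 6 * x ^+ 2 * y ^+ 4 - 18 * x ^+ 2 * y ^+ 5 + 5 * x ^+ 2 * y ^+ 7 + 2 * x ^+ 3 * y + 8 * x ^+ 3 * y ^+ 2 - 4 * x ^+ 3 * y ^+ 4 + x ^+ 4 * y)].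
Proof.
move=> hx hxy.
have [u hu ex] : exists2 u, 0 <= u & x = u + 2 by exists (x - 2); [lia | ring].
have [e he ey] : exists2 e, 0 <= e & y = u + e + 3 by exists (y - u - 3); [lia | ring].
rewrite ey ex; split.
- have -> : - (0 - 2 - 9 * (u + e + 3) - (u + e + 3) ^+ 2 + 28 * (u + e + 3) ^+ 3 + 27 * (u + e + 3) ^+ 4 - 20 * (u + e + 3) ^+ 5 - 33 * (u + e + 3) ^+ 6 + 4 * (u + e + 3) ^+ 7 + 14 * (u + e + 3) ^+ 8 - 2 * (u + e + 3) ^+ 10 - 8 * (u + 2) - 16 * (u + 2) * (u + e + 3) - 2 * (u + 2) * (u + e + 3) ^+ 2 + 20 * (u + 2) * (u + e + 3) ^+ 3 + 12 * (u + 2) * (u + e + 3) ^+ 4 + 2 * (u + 2) * (u + e + 3) ^+ 5 - 4 * (u + 2) * (u + e + 3) ^+ 6 - 8 * (u + 2) * (u + e + 3) ^+ 7 + 2 * (u + 2) * (u + e + 3) ^+ 9 - 6 * (u + 2) ^+ 2 - 12 * (u + 2) ^+ 2 * (u + e + 3) - 12 * (u + 2) ^+ 2 * (u + e + 3) ^+ 2 + 6 * (u + 2) ^+ 2 * (u + e + 3) ^+ 3 + 18 * (u + 2) ^+ 2 * (u + e + 3) ^+ 4 - 5 * (u + 2) ^+ 2 * (u + e + 3) ^+ 6 - 2 * (u + 2) ^+ 3 - 8 * (u + 2) ^+ 3 * (u + e + 3) + 4 * (u + 2) ^+ 3 * (u + e + 3) ^+ 3 - (u + 2) ^+ 4) =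 (((98 * 10 + 1) * 10 + 2) + (((53 * 10 + 0) * 10 + 1) * 10 + 3) * e + ((((12 * 10 + 1) * 10 + 7) * 10 + 6) * 10 + 0) * e ^+ 2 + ((((15 * 10 + 6) * 10 + 2) * 10 + 2) * 10 + 4) * e ^+ 3 + ((((12 * 10 + 4) * 10 + 0) * 10 + 2) * 10 + 0) * e ^+ 4 + (((63 * 10 + 8) * 10 + 6) * 10 + 2) * e ^+ 5 + (((21 * 10 + 7) * 10 + 3) * 10 + 3) * e ^+ 6 + ((48 * 10 + 6) * 10 + 0) * e ^+ 7 + (68 * 10 + 8) * e ^+ 8 + 56 * e ^+ 9 + 2 * e ^+ 10 + (((39 * 10 + 8) * 10 + 8) * 10 + 3) * u + ((((18 * 10 + 9) * 10 + 3) * 10 + 3) * 10 + 2) * u * e + ((((37 * 10 + 5) * 10 + 3) * 10 + 3) * 10 + 8) * u * e ^+ 2 + ((((40 * 10 + 7) * 10 + 9) * 10 + 6) * 10 + 8) * u * e ^+ 3 + ((((26 * 10 + 8) * 10 + 7) * 10 + 6) * 10 + 0) * u * e ^+ 4 + ((((11 * 10 + 1) * 10 + 9) * 10 + 2) * 10 + 8) * u * e ^+ 5 + (((29 * 10 + 6) * 10 + 7) * 10 + 6) * u * e ^+ 6 + ((48 * 10 + 6) * 10 + 4) * u * e ^+ 7 + (45 * 10 + 0) * u * e ^+ 8 + 18 * u * e ^+ 9 + (((69 * 10 + 2) * 10 + 7) * 10 + 9) * u ^+ 2 + ((((28 * 10 + 6) * 10 + 6) * 10 + 7) * 10 + 2)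 * u ^+ 2 * e + ((((48 * 10 + 4) * 10 + 6) * 10 + 2) * 10 + 9) * u ^+ 2 * e ^+ 2 + ((((43 * 10 + 8) * 10 + 8) * 10 + 7) * 10 + 4) * u ^+ 2 * e ^+ 3 + ((((23 * 10 + 4) * 10 + 3) * 10 + 0) * 10 + 2) * u ^+ 2 * e ^+ 4 + (((76 * 10 + 0) * 10 + 8) * 10 + 6) * u ^+ 2 * e ^+ 5 + (((14 * 10 + 7) * 10 + 8) * 10 + 9) * u ^+ 2 * e ^+ 6 + ((15 * 10 + 8) * 10 + 4) * u ^+ 2 * e ^+ 7 + 72 * u ^+ 2 * e ^+ 8 + (((67 * 10 + 4) * 10 + 8) * 10 + 4) * u ^+ 3 + ((((24 * 10 + 1) * 10 + 3) * 10 + 3) * 10 + 4) * u ^+ 3 * e + ((((34 * 10 + 2) * 10 + 6) * 10 + 4) * 10 + 6) * u ^+ 3 * e ^+ 2 + ((((25 * 10 + 2) * 10 + 5) * 10 + 8) * 10 + 4) * u ^+ 3 * e ^+ 3 + ((((10 * 10 + 5) * 10 + 3) * 10 + 9) * 10 + 0) * u ^+ 3 * e ^+ 4 + (((25 * 10 + 1) * 10 + 1) * 10 + 8) * u ^+ 3 * e ^+ 5 + ((31 * 10 + 9) * 10 + 2) * u ^+ 3 * e ^+ 6 + (16 * 10 + 8) * u ^+ 3 * e ^+ 7 + (((40 * 10 + 6) * 10 + 5) * 10 + 4) * u ^+ 4 + ((((12 * 10 + 4) * 10 + 4) * 10 + 0) * 10 + 0) * u ^+ 4 * e + ((((14 *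 10 + 5) * 10 + 2) * 10 + 2) * 10 + 5) * u ^+ 4 * e ^+ 2 + (((84 * 10 + 1) * 10 + 2) * 10 + 0) * u ^+ 4 * e ^+ 3 + (((25 * 10 + 8) * 10 + 3) * 10 + 5) * u ^+ 4 * e ^+ 4 + ((40 * 10 + 3) * 10 + 2) * u ^+ 4 * e ^+ 5 + (25 * 10 + 2) * u ^+ 4 * e ^+ 6 + (((15 * 10 + 7) * 10 + 3) * 10 + 0) * u ^+ 5 + (((40 * 10 + 6) * 10 + 6) * 10 + 4) * u ^+ 5 * e + (((37 * 10 + 8) * 10 + 0) * 10 + 0) * u ^+ 5 * e ^+ 2 + (((16 * 10 + 2) * 10 + 2) * 10 + 8) * u ^+ 5 * e ^+ 3 + ((32 * 10 + 7) * 10 + 6) * u ^+ 5 * e ^+ 4 + (25 * 10 + 2) * u ^+ 5 * e ^+ 5 + ((39 * 10 + 1) * 10 + 6) * u ^+ 6 + ((84 * 10 + 0) * 10 + 6) * u ^+ 6 * e + ((58 * 10 + 9) * 10 + 9) * u ^+ 6 * e ^+ 2 + ((16 * 10 + 8) * 10 + 0) * u ^+ 6 * e ^+ 3 + (16 * 10 + 8) * u ^+ 6 * e ^+ 4 + (60 * 10 + 6) * u ^+ 7 + ((10 * 10 + 5) * 10 + 4) * u ^+ 7 * e + (50 * 10 + 4) * u ^+ 7 * e ^+ 2 + 72 * u ^+ 7 * e ^+ 3 + 53 * u ^+ 8 + 72 * u ^+ 8 * e + 18 * u ^+ 8 * e ^+ 2 + 2 * u ^+ 9 + 2 * u ^+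 9 * e) by ring.
  by pos.
- have -> : (2 + 10 * (u + e + 3) + 5 * (u + e + 3) ^+ 2 - 21 * (u + e + 3) ^+ 3 - 23 * (u + e + 3) ^+ 4 + 12 * (u + e + 3) ^+ 5 + 22 * (u + e + 3) ^+ 6 - 2 * (u + e + 3) ^+ 7 - 8 * (u + e + 3) ^+ 8 + (u + e + 3) ^+ 10 + 7 * (u + 2) + 12 * (u + 2) * (u + e + 3) - 8 * (u + 2) * (u + e + 3) ^+ 2 - 22 * (u + 2) * (u + e + 3) ^+ 3 + 2 * (u + 2) * (u + e + 3) ^+ 4 + 12 * (u + 2) * (u + e + 3) ^+ 5 - 2 * (u + 2) * (u + e + 3) ^+ 7 + 4 * (u + 2) ^+ 2 - 4 * (u + 2) ^+ 2 * (u + e + 3) ^+ 2 + (u + 2) ^+ 2 * (u + e + 3) ^+ 4) = ((((15 * 10 + 1) * 10 + 4) * 10 + 6) + (((69 * 10 + 3) * 10 + 9) * 10 + 7) * e + ((((13 * 10 + 6) * 10 + 3) * 10 + 5) * 10 + 9) * e ^+ 2 + ((((15 * 10 + 1) * 10 + 4) * 10 + 4) * 10 + 1) * e ^+ 3 + ((((10 * 10 + 5) * 10 + 5) * 10 + 5) * 10 + 5) * e ^+ 4 + (((48 * 10 + 4) * 10 + 3) * 10 + 8) * e ^+ 5 + (((14 * 10 + 8) * 10 + 9) * 10 + 0) * e ^+ 6 + ((30 * 10 + 4) * 10 + 2) * e ^+ 7 + (39 * 10 + 7) * e ^+ 8 + 30 * e ^+ 9 + e ^+ 10 + (((67 * 10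 + 6) * 10 + 7) * 10 + 4) * u + ((((26 * 10 + 7) * 10 + 2) * 10 + 9) * 10 + 4) * u * e + ((((44 * 10 + 7) * 10 + 4) * 10 + 5) * 10 + 9) * u * e ^+ 2 + ((((41 * 10 + 7) * 10 + 6) * 10 + 8) * 10 + 0) * u * e ^+ 3 + ((((24 * 10 + 0) * 10 + 4) * 10 + 8) * 10 + 6) * u * e ^+ 4 + (((88 * 10 + 9) * 10 + 7) * 10 + 4) * u * e ^+ 5 + (((21 * 10 + 2) * 10 + 5) * 10 + 2) * u * e ^+ 6 + ((31 * 10 + 7) * 10 + 4) * u * e ^+ 7 + (27 * 10 + 0) * u * e ^+ 8 + 10 * u * e ^+ 9 + ((((13 * 10 + 0) * 10 + 9) * 10 + 8) * 10 + 4) * u ^+ 2 + ((((44 * 10 + 0) * 10 + 6) * 10 + 7) * 10 + 9) * u ^+ 2 * e + ((((61 * 10 + 9) * 10 + 7) * 10 + 6) * 10 + 0) * u ^+ 2 * e ^+ 2 + ((((47 * 10 + 7) * 10 + 5) * 10 + 7) * 10 + 6) * u ^+ 2 * e ^+ 3 + ((((22 * 10 + 1) * 10 + 5) * 10 + 2) * 10 + 1) * u ^+ 2 * e ^+ 4 + (((63 * 10 + 6) * 10 + 3) * 10 + 0) * u ^+ 2 * e ^+ 5 + (((11 * 10 + 1) * 10 + 0) * 10 + 2) * u ^+ 2 * e ^+ 6 + ((10 * 10 + 8) * 10 + 0) * u ^+ 2 * e ^+ 7 + 45 * u ^+ 2 * e ^+ 8 + ((((14 * 10 + 4) * 10 +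 6) * 10 + 6) * 10 + 1) * u ^+ 3 + ((((40 * 10 + 8) * 10 + 7) * 10 + 0) * 10 + 0) * u ^+ 3 * e + ((((47 * 10 + 4) * 10 + 1) * 10 + 9) * 10 + 2) * u ^+ 3 * e ^+ 2 + ((((29 * 10 + 4) * 10 + 1) * 10 + 4) * 10 + 4) * u ^+ 3 * e ^+ 3 + ((((10 * 10 + 5) * 10 + 8) * 10 + 4) * 10 + 0) * u ^+ 3 * e ^+ 4 + (((22 * 10 + 1) * 10 + 9) * 10 + 0) * u ^+ 3 * e ^+ 5 + ((25 * 10 + 2) * 10 + 0) * u ^+ 3 * e ^+ 6 + (12 * 10 + 0) * u ^+ 3 * e ^+ 7 + ((((10 * 10 + 1) * 10 + 0) * 10 + 6) * 10 + 5) * u ^+ 4 + ((((23 * 10 + 5) * 10 + 4) * 10 + 1) * 10 + 0) * u ^+ 4 * e + ((((21 * 10 + 9) * 10 + 6) * 10 + 9) * 10 + 6) * u ^+ 4 * e ^+ 2 + ((((10 * 10 + 5) * 10 + 6) * 10 + 3) * 10 + 0) * u ^+ 4 * e ^+ 3 + (((27 * 10 + 7) * 10 + 2) * 10 + 0) * u ^+ 4 * e ^+ 4 + ((37 * 10 + 8) * 10 + 0) * u ^+ 4 * e ^+ 5 + (21 * 10 + 0) * u ^+ 4 * e ^+ 6 + (((46 * 10 + 7) * 10 + 4) * 10 + 6) * u ^+ 5 + (((87 * 10 + 5) * 10 + 1) * 10 + 4) * u ^+ 5 * e + (((63 * 10 + 2) * 10 + 5) * 10 + 2) * u ^+ 5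 * e ^+ 2 + (((22 * 10 + 1) * 10 + 6) * 10 + 2) * u ^+ 5 * e ^+ 3 + ((37 * 10 + 8) * 10 + 0) * u ^+ 5 * e ^+ 4 + (25 * 10 + 2) * u ^+ 5 * e ^+ 5 + (((14 * 10 + 5) * 10 + 2) * 10 + 5) * u ^+ 6 + (((21 * 10 + 0) * 10 + 4) * 10 + 2) * u ^+ 6 * e + (((11 * 10 + 0) * 10 + 7) * 10 + 4) * u ^+ 6 * e ^+ 2 + ((25 * 10 + 2) * 10 + 0) * u ^+ 6 * e ^+ 3 + (21 * 10 + 0) * u ^+ 6 * e ^+ 4 + ((30 * 10 + 0) * 10 + 0) * u ^+ 7 + ((31 * 10 + 6) * 10 + 2) * u ^+ 7 * e + ((10 * 10 + 8) * 10 + 0) * u ^+ 7 * e ^+ 2 + (12 * 10 + 0) * u ^+ 7 * e ^+ 3 + (39 * 10 + 5) * u ^+ 8 + (27 * 10 + 0) * u ^+ 8 * e + 45 * u ^+ 8 * e ^+ 2 + 30 * u ^+ 9 + 10 * u ^+ 9 * e + u ^+ 10) by ring.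
  by pos.
- have -> : (2 * (u + e + 3) + 9 * (u + e + 3) ^+ 2 + (u + e + 3) ^+ 3 - 28 * (u + e + 3) ^+ 4 - 27 * (u + e + 3) ^+ 5 + 20 * (u + e + 3) ^+ 6 + 33 * (u + e + 3) ^+ 7 - 4 * (u + e + 3) ^+ 8 - 14 * (u + e + 3) ^+ 9 + 2 * (u + e + 3) ^+ 11 + 8 * (u + 2) * (u + e + 3) + 16 * (u + 2) * (u + e + 3) ^+ 2 + 2 * (u + 2) * (u + e + 3) ^+ 3 - 20 * (u + 2) * (u + e + 3) ^+ 4 - 12 * (u + 2) * (u + e + 3) ^+ 5 - 2 * (u + 2) * (u + e + 3) ^+ 6 + 4 * (u + 2) * (u + e + 3) ^+ 7 + 8 * (u + 2) * (u + e + 3) ^+ 8 - 2 * (u + 2) * (u + e + 3) ^+ 10 + 6 * (u + 2) ^+ 2 * (u + e + 3) + 12 * (u + 2) ^+ 2 * (u + e + 3) ^+ 2 + 12 * (u + 2) ^+ 2 * (u + e + 3) ^+ 3 - 6 * (u + 2) ^+ 2 * (u + e + 3) ^+ 4 - 18 * (u + 2) ^+ 2 * (u + e + 3) ^+ 5 + 5 * (u + 2) ^+ 2 * (u + e + 3) ^+ 7 + 2 * (u + 2) ^+ 3 * (u + e + 3) + 8 * (u + 2) ^+ 3 * (u + e + 3) ^+ 2 - 4 * (u + 2) ^+ 3 * (u + e + 3) ^+ 4 + (u + 2) ^+ 4 * (u + e + 3)) + (0 - 2 - 9 * (u + e + 3) - (u + e + 3) ^+ 2 + 28 * (u + e + 3)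 ^+ 3 + 27 * (u + e + 3) ^+ 4 - 20 * (u + e + 3) ^+ 5 - 33 * (u + e + 3) ^+ 6 + 4 * (u + e + 3) ^+ 7 + 14 * (u + e + 3) ^+ 8 - 2 * (u + e + 3) ^+ 10 - 8 * (u + 2) - 16 * (u + 2) * (u + e + 3) - 2 * (u + 2) * (u + e + 3) ^+ 2 + 20 * (u + 2) * (u + e + 3) ^+ 3 + 12 * (u + 2) * (u + e + 3) ^+ 4 + 2 * (u + 2) * (u + e + 3) ^+ 5 - 4 * (u + 2) * (u + e + 3) ^+ 6 - 8 * (u + 2) * (u + e + 3) ^+ 7 + 2 * (u + 2) * (u + e + 3) ^+ 9 - 6 * (u + 2) ^+ 2 - 12 * (u + 2) ^+ 2 * (u + e + 3) - 12 * (u + 2) ^+ 2 * (u + e + 3) ^+ 2 + 6 * (u + 2) ^+ 2 * (u + e + 3) ^+ 3 + 18 * (u + 2) ^+ 2 * (u + e + 3) ^+ 4 - 5 * (u + 2) ^+ 2 * (u + e + 3) ^+ 6 - 2 * (u + 2) ^+ 3 - 8 * (u + 2) ^+ 3 * (u + e + 3) + 4 * (u + 2) ^+ 3 * (u + e + 3) ^+ 3 - (u + 2) ^+ 4) = ((((19 * 10 + 6) * 10 + 2) * 10 + 4) + ((((11 * 10 + 5) * 10 + 8) * 10 + 3) * 10 + 8) * e + ((((29 * 10 + 6) * 10 + 5) * 10 + 3) * 10 + 3) * e ^+ 2 + ((((43 * 10 + 4) * 10 + 2) * 10 + 0) * 10 + 8) * e ^+ 3 + ((((40 * 10 + 4)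 * 10 + 2) * 10 + 6) * 10 + 4) * e ^+ 4 + ((((25 * 10 + 1) * 10 + 7) * 10 + 4) * 10 + 4) * e ^+ 5 + ((((10 * 10 + 7) * 10 + 3) * 10 + 2) * 10 + 8) * e ^+ 6 + (((31 * 10 + 4) * 10 + 5) * 10 + 3) * e ^+ 7 + ((62 * 10 + 3) * 10 + 6) * e ^+ 8 + (80 * 10 + 0) * e ^+ 9 + 60 * e ^+ 10 + 2 * e ^+ 11 + (((89 * 10 + 5) * 10 + 7) * 10 + 8) * u + ((((47 * 10 + 1) * 10 + 5) * 10 + 6) * 10 + 0) * u * e + (((((10 * 10 + 6) * 10 + 1) * 10 + 7) * 10 + 6) * 10 + 8) * u * e ^+ 2 + (((((13 * 10 + 4) * 10 + 7) * 10 + 4) * 10 + 9) * 10 + 8) * u * e ^+ 3 + (((((10 * 10 + 6) * 10 + 9) * 10 + 5) * 10 + 0) * 10 + 8) * u * e ^+ 4 + ((((55 * 10 + 6) * 10 + 4) * 10 + 7) * 10 + 8) * u * e ^+ 5 + ((((19 * 10 + 3) * 10 + 0) * 10 + 1) * 10 + 3) * u * e ^+ 6 + (((44 * 10 + 2) * 10 + 6) * 10 + 4) * u * e ^+ 7 + ((64 * 10 + 5) * 10 + 2) * u * e ^+ 8 + (54 * 10 + 2) * u * e ^+ 9 + 20 * u * e ^+ 10 + ((((17 * 10 + 8) * 10 + 4) * 10 + 4) * 10 + 1) * u ^+ 2 + ((((83 * 10 + 1) * 10 + 9) * 10 + 5) * 10 + 5) * u ^+ 2 * e + (((((16 * 10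 + 3) * 10 + 1) * 10 + 2) * 10 + 6) * 10 + 8) * u ^+ 2 * e ^+ 2 + (((((17 * 10 + 7) * 10 + 0) * 10 + 3) * 10 + 4) * 10 + 5) * u ^+ 2 * e ^+ 3 + (((((11 * 10 + 7) * 10 + 6) * 10 + 2) * 10 + 3) * 10 + 8) * u ^+ 2 * e ^+ 4 + ((((49 * 10 + 8) * 10 + 4) * 10 + 0) * 10 + 2) * u ^+ 2 * e ^+ 5 + ((((13 * 10 + 5) * 10 + 3) * 10 + 4) * 10 + 0) * u ^+ 2 * e ^+ 6 + (((22 * 10 + 8) * 10 + 2) * 10 + 1) * u ^+ 2 * e ^+ 7 + ((21 * 10 + 7) * 10 + 8) * u ^+ 2 * e ^+ 8 + 90 * u ^+ 2 * e ^+ 9 + ((((20 * 10 + 4) * 10 + 2) * 10 + 4) * 10 + 7) * u ^+ 3 + ((((83 * 10 + 6) * 10 + 8) * 10 + 2) * 10 + 4) * u ^+ 3 * e + (((((14 * 10 + 1) * 10 + 1) * 10 + 2) * 10 + 5) * 10 + 5) * u ^+ 3 * e ^+ 2 + (((((12 * 10 + 8) * 10 + 6) * 10 + 6) * 10 + 8) * 10 + 8) * u ^+ 3 * e ^+ 3 + ((((69 * 10 + 7) * 10 + 6) * 10 + 6) * 10 + 6) * u ^+ 3 * e ^+ 4 + ((((23 * 10 + 1) * 10 + 7) * 10 + 1) * 10 + 2) * u ^+ 3 * e ^+ 5 + (((46 * 10 + 2) * 10 + 9) * 10 + 1) * u ^+ 3 * e ^+ 6 + ((51 * 10 + 1) *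 10 + 2) * u ^+ 3 * e ^+ 7 + (24 * 10 + 0) * u ^+ 3 * e ^+ 8 + ((((14 * 10 + 8) * 10 + 7) * 10 + 9) * 10 + 2) * u ^+ 4 + ((((53 * 10 + 0) * 10 + 7) * 10 + 8) * 10 + 8) * u ^+ 4 * e + ((((75 * 10 + 7) * 10 + 4) * 10 + 9) * 10 + 6) * u ^+ 4 * e ^+ 2 + ((((56 * 10 + 6) * 10 + 0) * 10 + 4) * 10 + 9) * u ^+ 4 * e ^+ 3 + ((((24 * 10 + 1) * 10 + 1) * 10 + 8) * 10 + 0) * u ^+ 4 * e ^+ 4 + (((59 * 10 + 0) * 10 + 1) * 10 + 7) * u ^+ 4 * e ^+ 5 + ((77 * 10 + 2) * 10 + 8) * u ^+ 4 * e ^+ 6 + (42 * 10 + 0) * u ^+ 4 * e ^+ 7 + (((72 * 10 + 1) * 10 + 1) * 10 + 4) * u ^+ 5 + ((((22 * 10 + 1) * 10 + 4) * 10 + 5) * 10 + 8) * u ^+ 5 * e + ((((26 * 10 + 1) * 10 + 4) * 10 + 8) * 10 + 9) * u ^+ 5 * e ^+ 2 + ((((15 * 10 + 4) * 10 + 3) * 10 + 7) * 10 + 6) * u ^+ 5 * e ^+ 3 + (((48 * 10 + 6) * 10 + 1) * 10 + 5) * u ^+ 5 * e ^+ 4 + ((78 * 10 + 1) * 10 + 2) * u ^+ 5 * e ^+ 5 + (50 * 10 + 4) * u ^+ 5 * e ^+ 6 + (((23 * 10 + 5) * 10 + 6) * 10 + 2) * u ^+ 6 + (((61 * 10 + 3)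 * 10 + 9) * 10 + 2) * u ^+ 6 * e + (((58 * 10 + 0) * 10 + 0) * 10 + 4) * u ^+ 6 * e ^+ 2 + (((25 * 10 + 4) * 10 + 8) * 10 + 7) * u ^+ 6 * e ^+ 3 + ((52 * 10 + 9) * 10 + 2) * u ^+ 6 * e ^+ 4 + (42 * 10 + 0) * u ^+ 6 * e ^+ 5 + ((51 * 10 + 2) * 10 + 8) * u ^+ 7 + (((11 * 10 + 1) * 10 + 2) * 10 + 0) * u ^+ 7 * e + ((79 * 10 + 6) * 10 + 1) * u ^+ 7 * e ^+ 2 + ((23 * 10 + 2) * 10 + 8) * u ^+ 7 * e ^+ 3 + (24 * 10 + 0) * u ^+ 7 * e ^+ 4 + (71 * 10 + 2) * u ^+ 8 + ((12 * 10 + 5) * 10 + 1) * u ^+ 8 * e + (61 * 10 + 2) * u ^+ 8 * e ^+ 2 + 90 * u ^+ 8 * e ^+ 3 + 57 * u ^+ 9 + 78 * u ^+ 9 * e + 20 * u ^+ 9 * e ^+ 2 + 2 * u ^+ 10 + 2 * u ^+ 10 * e) by ring.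
  by pos.
- rewrite -subr_ge0.
  have -> : ((u + e + 3) + 7 * (u + e + 3) ^+ 2 + 5 * (u + e + 3) ^+ 3 - 8 * (u + e + 3) ^+ 4 - 11 * (u + e + 3) ^+ 5 + 2 * (u + e + 3) ^+ 6 + 6 * (u + e + 3) ^+ 7 - (u + e + 3) ^+ 9 + (u + 2) + 8 * (u + 2) * (u + e + 3) + 11 * (u + 2) * (u + e + 3) ^+ 2 - 4 * (u + 2) * (u + e + 3) ^+ 3 - 12 * (u + 2) * (u + e + 3) ^+ 4 + 3 * (u + 2) * (u + e + 3) ^+ 6 + 2 * (u + 2) ^+ 2 + 6 * (u + 2) ^+ 2 * (u + e + 3) - 3 * (u + 2) ^+ 2 * (u + e + 3) ^+ 3 + (u + 2) ^+ 3) + (0 - 2 - 9 * (u + e + 3) - (u + e + 3) ^+ 2 + 28 * (u + e + 3) ^+ 3 + 27 * (u + e + 3) ^+ 4 - 20 * (u + e + 3) ^+ 5 - 33 * (u + e + 3) ^+ 6 + 4 * (u + e + 3) ^+ 7 + 14 * (u + e + 3) ^+ 8 - 2 * (u + e + 3) ^+ 10 - 8 * (u + 2) - 16 * (u + 2) * (u + e + 3) - 2 * (u + 2) * (u + e + 3) ^+ 2 + 20 * (u + 2) * (u + e + 3) ^+ 3 + 12 * (u + 2) * (u + e + 3) ^+ 4 + 2 * (u + 2) * (u + e + 3) ^+ 5 - 4 * (u + 2) * (u + e + 3) ^+ 6 - 8 * (u + 2) * (u + e + 3) ^+ 7 + 2 * (u + 2) * (u + e + 3) ^+ 9 - 6 *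 (u + 2) ^+ 2 - 12 * (u + 2) ^+ 2 * (u + e + 3) - 12 * (u + 2) ^+ 2 * (u + e + 3) ^+ 2 + 6 * (u + 2) ^+ 2 * (u + e + 3) ^+ 3 + 18 * (u + 2) ^+ 2 * (u + e + 3) ^+ 4 - 5 * (u + 2) ^+ 2 * (u + e + 3) ^+ 6 - 2 * (u + 2) ^+ 3 - 8 * (u + 2) ^+ 3 * (u + e + 3) + 4 * (u + 2) ^+ 3 * (u + e + 3) ^+ 3 - (u + 2) ^+ 4) + (2 + 10 * (u + e + 3) + 5 * (u + e + 3) ^+ 2 - 21 * (u + e + 3) ^+ 3 - 23 * (u + e + 3) ^+ 4 + 12 * (u + e + 3) ^+ 5 + 22 * (u + e + 3) ^+ 6 - 2 * (u + e + 3) ^+ 7 - 8 * (u + e + 3) ^+ 8 + (u + e + 3) ^+ 10 + 7 * (u + 2) + 12 * (u + 2) * (u + e + 3) - 8 * (u + 2) * (u + e + 3) ^+ 2 - 22 * (u + 2) * (u + e + 3) ^+ 3 + 2 * (u + 2) * (u + e + 3) ^+ 4 + 12 * (u + 2) * (u + e + 3) ^+ 5 - 2 * (u + 2) * (u + e + 3) ^+ 7 + 4 * (u + 2) ^+ 2 - 4 * (u + 2) ^+ 2 * (u + e + 3) ^+ 2 + (u + 2) ^+ 2 * (u + e + 3) ^+ 4) + (2 * (u + e + 3) + 9 * (u + e + 3) ^+ 2 + (u + e + 3) ^+ 3 - 28 * (u + e + 3) ^+ 4 - 27 * (u + e + 3) ^+ 5 + 20 * (u + e + 3) ^+ 6 +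 33 * (u + e + 3) ^+ 7 - 4 * (u + e + 3) ^+ 8 - 14 * (u + e + 3) ^+ 9 + 2 * (u + e + 3) ^+ 11 + 8 * (u + 2) * (u + e + 3) + 16 * (u + 2) * (u + e + 3) ^+ 2 + 2 * (u + 2) * (u + e + 3) ^+ 3 - 20 * (u + 2) * (u + e + 3) ^+ 4 - 12 * (u + 2) * (u + e + 3) ^+ 5 - 2 * (u + 2) * (u + e + 3) ^+ 6 + 4 * (u + 2) * (u + e + 3) ^+ 7 + 8 * (u + 2) * (u + e + 3) ^+ 8 - 2 * (u + 2) * (u + e + 3) ^+ 10 + 6 * (u + 2) ^+ 2 * (u + e + 3) + 12 * (u + 2) ^+ 2 * (u + e + 3) ^+ 2 + 12 * (u + 2) ^+ 2 * (u + e + 3) ^+ 3 - 6 * (u + 2) ^+ 2 * (u + e + 3) ^+ 4 - 18 * (u + 2) ^+ 2 * (u + e + 3) ^+ 5 + 5 * (u + 2) ^+ 2 * (u + e + 3) ^+ 7 + 2 * (u + 2) ^+ 3 * (u + e + 3) + 8 * (u + 2) ^+ 3 * (u + e + 3) ^+ 2 - 4 * (u + 2) ^+ 3 * (u + e + 3) ^+ 4 + (u + 2) ^+ 4 * (u + e + 3)) - 1 = ((((28 * 10 + 7) * 10 + 7) * 10 + 2) + ((((16 * 10 + 0) * 10 + 3) * 10 + 6) * 10 + 7) * e + ((((38 * 10 + 9) * 10 + 6) * 10 + 9) * 10 + 4) * e ^+ 2 + ((((54 * 10 + 4) * 10 + 3) * 10 + 5) * 10 + 4) * e ^+ 3 +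 ((((48 * 10 + 5) * 10 + 7) * 10 + 5) * 10 + 4) * e ^+ 4 + ((((29 * 10 + 1) * 10 + 2) * 10 + 4) * 10 + 3) * e ^+ 5 + ((((12 * 10 + 0) * 10 + 0) * 10 + 8) * 10 + 4) * e ^+ 6 + (((34 * 10 + 1) * 10 + 7) * 10 + 7) * e ^+ 7 + ((66 * 10 + 0) * 10 + 6) * e ^+ 8 + (82 * 10 + 9) * e ^+ 9 + 61 * e ^+ 10 + 2 * e ^+ 11 + ((((13 * 10 + 3) * 10 + 3) * 10 + 8) * 10 + 3) * u + ((((65 * 10 + 5) * 10 + 2) * 10 + 0) * 10 + 2) * u * e + (((((13 * 10 + 8) * 10 + 8) * 10 + 2) * 10 + 0) * 10 + 6) * u * e ^+ 2 + (((((16 * 10 + 7) * 10 + 0) * 10 + 3) * 10 + 7) * 10 + 8) * u * e ^+ 3 + (((((12 * 10 + 6) * 10 + 5) * 10 + 6) * 10 + 9) * 10 + 2) * u * e ^+ 4 + ((((63 * 10 + 2) * 10 + 7) * 10 + 0) * 10 + 2) * u * e ^+ 5 + ((((21 * 10 + 2) * 10 + 0) * 10 + 4) * 10 + 2) * u * e ^+ 6 + (((47 * 10 + 2) * 10 + 2) * 10 + 2) * u * e ^+ 7 + ((67 * 10 + 1) * 10 + 3) * u * e ^+ 8 + (55 * 10 + 2) * u * e ^+ 9 + 20 * u * e ^+ 10 + ((((26 * 10 + 8) * 10 + 9) * 10 + 1) * 10 + 6) * u ^+ 2 + (((((11 * 10 + 5) * 10 + 4) * 10 + 4) * 10 + 0)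 * 10 + 2) * u ^+ 2 * e + (((((21 * 10 + 1) * 10 + 0) * 10 + 9) * 10 + 9) * 10 + 1) * u ^+ 2 * e ^+ 2 + (((((21 * 10 + 6) * 10 + 0) * 10 + 1) * 10 + 0) * 10 + 0) * u ^+ 2 * e ^+ 3 + (((((13 * 10 + 6) * 10 + 6) * 10 + 0) * 10 + 1) * 10 + 9) * u ^+ 2 * e ^+ 4 + ((((55 * 10 + 5) * 10 + 3) * 10 + 7) * 10 + 2) * u ^+ 2 * e ^+ 5 + ((((14 * 10 + 5) * 10 + 6) * 10 + 8) * 10 + 6) * u ^+ 2 * e ^+ 6 + (((23 * 10 + 8) * 10 + 6) * 10 + 5) * u ^+ 2 * e ^+ 7 + ((22 * 10 + 2) * 10 + 3) * u ^+ 2 * e ^+ 8 + 90 * u ^+ 2 * e ^+ 9 + ((((31 * 10 + 0) * 10 + 4) * 10 + 0) * 10 + 3) * u ^+ 3 + (((((11 * 10 + 5) * 10 + 3) * 10 + 5) * 10 + 9) * 10 + 0) * u ^+ 3 * e + (((((17 * 10 + 9) * 10 + 8) * 10 + 4) * 10 + 0) * 10 + 6) * u ^+ 3 * e ^+ 2 + (((((15 * 10 + 3) * 10 + 8) * 10 + 6) * 10 + 9) * 10 + 2) * u ^+ 3 * e ^+ 3 + ((((79 * 10 + 2) * 10 + 4) * 10 + 2) * 10 + 1) * u ^+ 3 * e ^+ 4 + ((((25 * 10 + 2) * 10 + 3) * 10 + 9) * 10 + 0) * u ^+ 3 * e ^+ 5 + (((48 * 10 + 7) * 10 + 2) * 10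 + 7) * u ^+ 3 * e ^+ 6 + ((52 * 10 + 3) * 10 + 2) * u ^+ 3 * e ^+ 7 + (24 * 10 + 0) * u ^+ 3 * e ^+ 8 + ((((22 * 10 + 7) * 10 + 2) * 10 + 2) * 10 + 5) * u ^+ 4 + ((((72 * 10 + 3) * 10 + 0) * 10 + 6) * 10 + 6) * u ^+ 4 * e + ((((94 * 10 + 5) * 10 + 7) * 10 + 2) * 10 + 2) * u ^+ 4 * e ^+ 2 + ((((66 * 10 + 0) * 10 + 6) * 10 + 0) * 10 + 9) * u ^+ 4 * e ^+ 3 + ((((26 * 10 + 7) * 10 + 0) * 10 + 1) * 10 + 0) * u ^+ 4 * e ^+ 4 + (((62 * 10 + 6) * 10 + 7) * 10 + 1) * u ^+ 4 * e ^+ 5 + ((79 * 10 + 3) * 10 + 8) * u ^+ 4 * e ^+ 6 + (42 * 10 + 0) * u ^+ 4 * e ^+ 7 + ((((11 * 10 + 0) * 10 + 3) * 10 + 1) * 10 + 1) * u ^+ 5 + ((((29 * 10 + 6) * 10 + 4) * 10 + 3) * 10 + 8) * u ^+ 5 * e + ((((31 * 10 + 8) * 10 + 1) * 10 + 0) * 10 + 8) * u ^+ 5 * e ^+ 2 + ((((17 * 10 + 5) * 10 + 0) * 10 + 2) * 10 + 6) * u ^+ 5 * e ^+ 3 + (((52 * 10 + 2) * 10 + 6) * 10 + 9) * u ^+ 5 * e ^+ 4 + ((80 * 10 + 6) * 10 + 4) * u ^+ 5 * e ^+ 5 + (50 * 10 + 4) * u ^+ 5 * e ^+ 6 + (((36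 * 10 + 0) * 10 + 0) * 10 + 7) * u ^+ 6 + (((80 * 10 + 2) * 10 + 2) * 10 + 6) * u ^+ 6 * e + (((68 * 10 + 3) * 10 + 2) * 10 + 2) * u ^+ 6 * e ^+ 2 + (((27 * 10 + 9) * 10 + 2) * 10 + 3) * u ^+ 6 * e ^+ 3 + ((55 * 10 + 0) * 10 + 2) * u ^+ 6 * e ^+ 4 + (42 * 10 + 0) * u ^+ 6 * e ^+ 5 + ((78 * 10 + 1) * 10 + 3) * u ^+ 7 + (((14 * 10 + 0) * 10 + 6) * 10 + 6) * u ^+ 7 * e + ((90 * 10 + 0) * 10 + 5) * u ^+ 7 * e ^+ 2 + ((24 * 10 + 4) * 10 + 8) * u ^+ 7 * e ^+ 3 + (24 * 10 + 0) * u ^+ 7 * e ^+ 4 + ((10 * 10 + 8) * 10 + 0) * u ^+ 8 + ((15 * 10 + 1) * 10 + 2) * u ^+ 8 * e + (65 * 10 + 7) * u ^+ 8 * e ^+ 2 + 90 * u ^+ 8 * e ^+ 3 + 86 * u ^+ 9 + 88 * u ^+ 9 * e + 20 * u ^+ 9 * e ^+ 2 + 3 * u ^+ 10 + 2 * u ^+ 10 * e) by ring.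
  by pos.
Qed.

Definition good (M : 'M[int]_2) :=
  [/\ 1 <= M 0 0, 0 <= M 0 1, 0 <= M 1 0 & 1 <= M 1 1].

Lemma mk00 a b c d : mk a b c d 0 0 = a. Proof. by rewrite mxE. Qed.
Lemma mk01 a b c d : mk a b c d 0 1 = b. Proof. by rewrite mxE. Qed.
Lemma mk10 a b c d : mk a b c d 1 0 = c. Proof. by rewrite mxE. Qed.
Lemma mk11 a b c d : mk a b c d 1 1 = d. Proof. by rewrite mxE. Qed.

Lemma good_mk a b c d : good (mk a b c d) <-> [/\ 1 <= a, 0 <= b, 0 <= c & 1 <= d].
Proof. by rewrite /good mk00 mk01 mk10 mk11. Qed.

Lemma good_mul M N : good M -> good N -> good (M *m N).
Proof.
rewrite (mkE M) (mkE N) mk_mul.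
move: (M 0 0) (M 0 1) (M 1 0) (M 1 1) (N 0 0) (N 0 1) (N 1 0) (N 1 1) =>
  a b c d p q r s /good_mk [ha hb hc hd] /good_mk [hp hq hr hs].
apply/good_mk; split; nia.
Qed.

Lemma good1 : good 1%:M.
Proof. by rewrite mk_scalar; apply/good_mk. Qed.

Lemma good_SL A : SL2Znn A -> good A.
Proof.
case=> hdet hnn; move: (hnn 0 0) (hnn 0 1) (hnn 1 0) (hnn 1 1) hdet.
rewrite [in \det A](mkE A) mk_det /good.
move: (A 0 0) (A 0 1) (A 1 0) (A 1 1) => a b c d ha hb hc hd hdet.
have hbc : 0 <= b * c by apply: mulr_ge0.
have had : 0 < a * d by lia.
have a0 : a != 0 by apply/eqP => a0; move: had; rewrite a0 mul0r ltxx.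
have d0 : d != 0 by apply/eqP => d0; move: had; rewrite d0 mulr0 ltxx.
split => //; lia.
Qed.

Lemma phi_cat A B w1 w2 : phi A B (w1 ++ w2) = phi A B w1 *m phi A B w2.
Proof.
elim: w1 => [|l w IH] /=; first by rewrite mul1mx.
by rewrite /phi /= -/(phi A B (w ++ w2)) IH mulmxA.
Qed.

Lemma good_phi A B w : good A -> good B -> good (phi A B w).
Proof.
move=> gA gB; elim: w => [|l w IH] /=; first exact: good1.
by apply: good_mul => //; case: l.
Qed.

Fixpoint mxpow (M : 'M[int]_2) (n : nat) : 'M[int]_2 :=
  if n is n'.+1 then M *m mxpow M n' else 1%:M.

Lemma phi_wpow A B u n : phi A B (wpow u n) = mxpow (phi A B u) n.
Proof.
elim: n => [|n IH] //=.
by rewrite /wpow /= phi_cat -/(wpow u n) IH.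
Qed.

Lemma mxpow_add M a b : mxpow M (a + b) = mxpow M a *m mxpow M b.
Proof.
elim: a => [|a IH] /=; first by rewrite mul1mx.
by rewrite IH mulmxA.
Qed.

Lemma mxpow_comm M n : M *m mxpow M n = mxpow M n *m M.
Proof.
elim: n => [|n IH] /=; first by rewrite mul1mx mulmx1.
by rewrite -mulmxA IH mulmxA.
Qed.

Lemma CH2 (M : 'M[int]_2) : M *m M = \tr M *: M - (\det M)%:M.
Proof.
rewrite [in LHS](mkE M) [in \tr M](mkE M) [in \det M](mkE M) [X in _ *: X](mkE M).
rewrite mk_mul mk_tr mk_det mk_scale mk_scalar mk_opp mk_add.
congr mk; ring.
Qed.

Lemma powQ (Q : 'M[int]_2) k : \det Q = 1 -> 2 <= \tr Q ->
  exists m n : int, [/\ 1 <= m, 0 <= n &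
    mxpow Q k = m%:M + n *: (Q - 1%:M)].
Proof.
move=> hd ht; elim: k => [|k [m [n [hm hn IH]]]].
  by exists 1, 0; split => //; rewrite scale0r addr0.
exists (m + (\tr Q - 2) * n), (m + (\tr Q - 1) * n); split.
- have : 0 <= (\tr Q - 2) * n by apply: mulr_ge0 => //; rewrite subr_ge0.
  lia.
- have : 0 <= (\tr Q - 1) * n by apply: mulr_ge0 => //; rewrite subr_ge0; lia.
  lia.
rewrite /= IH mulmxDr mul_mx_scalar -scalemxAr mulmxBr mulmx1 CH2 hd.
apply/matrixP => i j; rewrite !mxE; ring.
Qed.

Lemma Zf_bilin (Q C G : 'M[int]_2) m n m' n' :
  Zf Q C (m%:M + n *: G) (m'%:M + n' *: G) =
  (m * m') *: Zf Q C 1%:M 1%:M + (m * n') *: Zf Q C 1%:M G +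
  (n * m') *: Zf Q C G 1%:M + (n * n') *: Zf Q C G G.
Proof.
rewrite /Zf (mkE Q) (mkE C) (mkE G).
move: (Q 0 0) (Q 0 1) (Q 1 0) (Q 1 1) (C 0 0) (C 0 1) (C 1 0) (C 1 1) => a b c d p q r s.
move: (G 0 0) (G 0 1) (G 1 0) (G 1 1) => g0 g1 g2 g3.
rewrite !mk_scalar !mk_scale !mk_add !mk_mul !mk_opp !mk_add !mk_scale !mk_add.
congr mk; ring.
Qed.

Lemma comb1 (a b c d z1 z2 z3 z4 : int) : 1 <= a -> 0 <= b -> 0 <= c -> 0 <= d ->
  1 <= z1 -> 0 <= z2 -> 0 <= z3 -> 0 <= z4 -> 1 <= a * z1 + b * z2 + c * z3 + d * z4.
Proof.
move=> ha hb hc hd h1 h2 h3 h4.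
have := mulr_ge0 hb h2; have := mulr_ge0 hc h3; have := mulr_ge0 hd h4.
have : 0 <= (a - 1) * (z1 - 1) by apply: mulr_ge0; lia.
nra.
Qed.

Lemma comb0 (a b c d z1 z2 z3 z4 : int) : 0 <= a -> 0 <= b -> 0 <= c -> 0 <= d ->
  0 <= z1 -> 0 <= z2 -> 0 <= z3 -> 0 <= z4 -> 0 <= a * z1 + b * z2 + c * z3 + d * z4.
Proof.
move=> ha hb hc hd h1 h2 h3 h4.
by rewrite !addr_ge0 // mulr_ge0.
Qed.

Lemma good_comb a b c d Z1 Z2 Z3 Z4 : 1 <= a -> 0 <= b -> 0 <= c -> 0 <= d ->
  good Z1 -> good Z2 -> good Z3 -> good Z4 ->
  good (a *: Z1 + b *: Z2 + c *: Z3 + d *: Z4).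
Proof.
move=> ha hb hc hd [h1 h2 h3 h4] [h5 h6 h7 h8] [h9 h10 h11 h12] [h13 h14 h15 h16].
have z1 : forall z : int, 1 <= z -> 0 <= z by move=> z hz; lia.
rewrite /good !mxE; split.
- by apply: comb1 => //; apply: z1.
- by apply: comb0 => //; apply: z1.
- by apply: comb0 => //; apply: z1.
- by apply: comb1 => //; apply: z1.
Qed.

Lemma tr_pos W Z : good W -> good Z -> 0 < \tr (W *m Z).
Proof.
rewrite (mkE W) (mkE Z) mk_mul mk_tr.
move: (W 0 0) (W 0 1) (W 1 0) (W 1 1) (Z 0 0) (Z 0 1) (Z 1 0) (Z 1 1) =>
  a b c d p q r s /good_mk [ha hb hc hd] /good_mk [hp hq hr hs].
nia.
Qed.

Lemma pos_lin A B al be ga ep : good A -> good B ->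
  0 <= - be -> 0 <= ga -> 0 <= ep + be -> 1 <= al + be + ga + ep ->
  good (lin A B al be ga ep).
Proof.
rewrite /lin (mkE A) (mkE B) mk_mul !mk_scale !mk_scalar !mk_add.
move: (A 0 0) (A 0 1) (A 1 0) (A 1 1) (B 0 0) (B 0 1) (B 1 0) (B 1 1) =>
  a b c d p q r s /good_mk [ha hb hc hd] /good_mk [hp hq hr hs] h1 h2 h3 h4.
apply/good_mk.
have e1 : 0 <= (ep + be) * (a * p + b * r - 1) by apply: mulr_ge0 => //; nia.
have e2 : 0 <= (- be) * (a * p + b * r - a) by apply: mulr_ge0 => //; nia.
have e3 : 0 <= ga * (p - 1) by apply: mulr_ge0 => //; lia.
have e4 : 0 <= (ep + be) * (a * q + b * s) by apply: mulr_ge0 => //; nia.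
have e5 : 0 <= (- be) * (a * q + b * s - b) by apply: mulr_ge0 => //; nia.
have e6 : 0 <= ga * q by apply: mulr_ge0.
have e7 : 0 <= (ep + be) * (c * p + d * r) by apply: mulr_ge0 => //; nia.
have e8 : 0 <= (- be) * (c * p + d * r - c) by apply: mulr_ge0 => //; nia.
have e9 : 0 <= ga * r by apply: mulr_ge0.
have e10 : 0 <= (ep + be) * (c * q + d * s - 1) by apply: mulr_ge0 => //; nia.
have e11 : 0 <= (- be) * (c * q + d * s - d) by apply: mulr_ge0 => //; nia.
have e12 : 0 <= ga * (s - 1) by apply: mulr_ge0 => //; lia.
split; nra.
Qed.

Lemma linB (A B : 'M[int]_2) : B = lin A B 0 0 1 0.
Proof.
rewrite /lin [in RHS](mkE A) [in RHS](mkE B) [in LHS](mkE B).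
rewrite !mk_mul !mk_scale !mk_scalar !mk_add; congr mk; ring.
Qed.

Lemma linC (A B : 'M[int]_2) : A *m B = lin A B 0 0 0 1.
Proof.
rewrite /lin (mkE A) (mkE B).
rewrite !mk_mul !mk_scale !mk_scalar !mk_add; congr mk; ring.
Qed.

Lemma lin1 (A B : 'M[int]_2) : 1%:M = lin A B 1 0 0 0.
Proof.
rewrite /lin (mkE A) (mkE B).
rewrite !mk_mul !mk_scale !mk_scalar !mk_add; congr mk; ring.
Qed.

Lemma linQ (A B : 'M[int]_2) x y : Hyp A B x y -> A *m B *m B = lin A B 0 (0 - 1) 0 y.
Proof.
move=> H.
have -> : A *m B *m B = lin A B 0 0 0 1 *m lin A B 0 0 1 0 by rewrite -linC -linB.
by rewrite (@lin_mul A B x y H); congr lin; ring.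
Qed.

Lemma linG (A B : 'M[int]_2) x y : Hyp A B x y ->
  A *m B *m B - 1%:M = lin A B (0 - 1) (0 - 1) 0 y.
Proof.
move=> H; rewrite (@linQ A B x y H) (lin1 A B) lin_sub; congr lin; ring.
Qed.

Arguments linQ {A B x y}.
Arguments linG {A B x y}.
Arguments ZII_lin {A B x y}.
Arguments ZIG_lin {A B x y}.
Arguments ZGI_lin {A B x y}.
Arguments ZGG_lin {A B x y}.
Arguments powQ {Q}.
Arguments ZII_sign {x y}.
Arguments ZIG_sign {x y}.
Arguments ZGI_sign {x y}.
Arguments ZGG_sign {x y}.
Arguments good_phi {A B}.

Lemma good_tr M : good M -> 2 <= \tr M.
Proof. by case=> h1 _ _ h2; rewrite (mkE M) mk_tr; lia. Qed.

Lemma trBB (B : 'M[int]_2) : \tr (B *m B) = \tr B ^+ 2 - 2 * \det B.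
Proof. by rewrite (mkE B) mk_mul !mk_tr mk_det; ring. Qed.

Arguments good_SL {A}.
Arguments good_tr {M}.

Theorem lemma6p3 (A B : 'M[int]_2) (w : word) (k h : nat) :
  SL2Znn A -> SL2Znn B ->
  A *m B != B *m A ->
  well_oriented A B ->
  \tr A < \tr B ->
  \tr (A *m B) = \tr (B *m B) ->
  (w = [::] \/ ends_with_b w) ->
  wtr A B ([:: La; Lb; Lb] ++ w ++ [:: La; Lb] ++ wpow [:: La; Lb; Lb] k
           ++ [:: La; Lb] ++ wpow [:: La; Lb; Lb] h ++ [:: La; Lb])
  < wtr A B ([:: La; Lb; Lb] ++ w ++ wpow [:: La; Lb; Lb] (k + h + 2)).
Proof.
move=> sA sB _ _ hxy htr _.
have gA := good_SL sA; have gB := good_SL sB.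
have hx2 := good_tr gA.
have H : Hyp A B (\tr A) (\tr B).
  split => //; [exact: sA.1 | exact: sB.1 | by rewrite htr trBB sB.1 mulr1].
move: H hx2 hxy; set x := \tr A; set y := \tr B => H hx2 hxy.
rewrite /wtr !phi_cat !phi_wpow.
have p3 : phi A B [:: La; Lb; Lb] = A *m B *m B by rewrite /phi /= mulmx1 !mulmxA.
have p2 : phi A B [:: La; Lb] = A *m B by rewrite /phi /= mulmx1.
rewrite p3 p2.
have gW := good_phi w gA gB.
move: gW; set W := phi A B w => gW.
have eQ := linQ H; have eG := linG H.
move: eQ eG; set Q := A *m B *m B => eQ eG.
have eC := linC A B; move: eC; set C := A *m B => eC.
have dQ : \det Q = 1 by rewrite /Q !det_mulmx sA.1 sB.1 !mulr1.
have gQ : good Q by rewrite /Q; apply: good_mul => //; apply: good_mul.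
have tQ := good_tr gQ.
rewrite !(mxtrace_mulC Q).
set X := mxpow Q k; set Y := mxpow Q h.
have eL : W *m (C *m (X *m (C *m (Y *m C)))) *m Q = W *m (C *m X *m C *m Y *m C *m Q)
  by rewrite !mulmxA.
have eR : W *m mxpow Q (k + h + 2) *m Q = W *m (Q *m X *m Q *m Y *m Q).
  have -> : (k + h + 2 = k.+1 + h.+1)%N by rewrite addnS addSn; lia.
  by rewrite mxpow_add /= !mulmxA.
rewrite eL eR -subr_gt0 -linearB /= -mulmxBr -/(Zf Q C X Y).
apply: tr_pos => //.
have [m [n [hm hn eX]]] := powQ k dQ tQ.
have [m' [n' [hm' hn' eY]]] := powQ h dQ tQ.
rewrite /X /Y eX eY Zf_bilin.
have hm0 : 0 <= m by lia.
have hm0' : 0 <= m' by lia.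
apply: good_comb.
- exact: mulr_ege1.
- exact: mulr_ge0.
- exact: mulr_ge0.
- exact: mulr_ge0.
- rewrite eQ eC (lin1 A B) (ZII_lin H).
  by case: (ZII_sign hx2 hxy) => h1 h2 h3 h4; apply: pos_lin.
- rewrite eG eQ eC (lin1 A B) (ZIG_lin H).
  by case: (ZIG_sign hx2 hxy) => h1 h2 h3 h4; apply: pos_lin.
- rewrite eG eQ eC (lin1 A B) (ZGI_lin H).
  by case: (ZGI_sign hx2 hxy) => h1 h2 h3 h4; apply: pos_lin.
- rewrite eG eQ eC (ZGG_lin H).
  by case: (ZGG_sign hx2 hxy) => h1 h2 h3 h4; apply: pos_lin.
Qed.
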